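(* Let $-1<p\le\frac23$ and $\gamma,a,w>0$, with moreover $\gamma^{-1/3}>a$ if $p=\frac23$. Consider the system \[ \begin{cases} i u_t + u_{xx} = a|u|^p u + u v,\\ v_t + f(v)_x = (|u|^2)_x, \end{cases}\qquad f(v)=-\gamma v^3 . \] Then it admits non-trivial solutions of the form $(u(x,t),v(x,t))=(e^{iwt}\phi(x),\psi(x))$, where $\phi\in C^2(\mathbb{R})\cap W^{2,\infty}(\mathbb{R})$ and $-\psi=\big(\frac{\phi^2}{\gamma}\big)^{1/3}\in C^1(\mathbb{R})\cap W^{1,\infty}(\mathbb{R})$ are non-negative, radially decreasing functions. Moreover: (i) if $p>-\frac23$, then $\phi\in C^3(\mathbb{R})\cap W^{3,\infty}(\mathbb{R})$ and $\psi\in C^2(\mathbb{R})\cap W^{2,\infty}(\mathbb{R})$; (ii) if $-1<p<0$, then $\phi$ and $\psi$ are compactly supported.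
   Context: Radially decreasing means even and nonincreasing on $[0,\infty)$. *)

(* Defs.v *)
From Stdlib Require Import Reals.
From Coquelicot Require Import Coquelicot.
Open Scope R_scope.

(* Real power x^y for x >= 0, with the convention 0^y = 0 (used only where
   this is the continuous extension, or multiplied by something vanishing). *)
Definition rpow (x y : R) : R := if Req_EM_T x 0 then 0 else Rpower x y.

Definition radially_decreasing (f : R -> R) : Prop :=
  (forall x, f (- x) = f x) /\ (forall x y, 0 <= x -> x <= y -> f y <= f x).

Definition Ck (k : nat) (f : R -> R) : Prop :=
  (forall j x, (j < k)%nat -> ex_derive (Derive_n f j) x) /\
  (forall j x, (j <= k)%nat -> continuous (Derive_n f j) x).

(* f in C^k(R) ∩ W^{k,oo}(R): C^k with all derivatives of order <= k bounded
   (for C^k functions the weak derivatives are the classical ones). *)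
Definition CkWkinf (k : nat) (f : R -> R) : Prop :=
  Ck k f /\ (forall j, (j <= k)%nat -> exists M, forall x, Rabs (Derive_n f j x) <= M).

Definition compactly_supported (f : R -> R) : Prop :=
  exists M, forall x, M < Rabs x -> f x = 0.

Definition flux (gamma v : R) : R := - gamma * v ^ 3.

Definition nonlin (p : R) (z : C) : C := Cmult (RtoC (rpow (Cmod z) p)) z.

Definition is_solution (p a gamma : R) (u : R -> R -> C) (v : R -> R -> R) : Prop :=
  (forall x t, exists (ut uxx : C) (ux : R -> C),
      is_derive (fun s => u x s) t ut /\
      (forall y, is_derive (fun y' => u y' t) y (ux y)) /\
      is_derive ux x uxx /\
      Cplus (Cmult Ci ut) uxx =
        Cplus (Cmult (RtoC a) (nonlin p (u x t))) (Cmult (u x t) (RtoC (v x t)))) /\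
  (forall x t, exists vt fx gx : R,
      is_derive (fun s => v x s) t vt /\
      is_derive (fun y => flux gamma (v y t)) x fx /\
      is_derive (fun y => Cmod (u y t) ^ 2) x gx /\
      vt + fx = gx).

(* Main.v *)
Require Import Defs.
From Stdlib Require Import Reals.
From Coquelicot Require Import Coquelicot.
Open Scope R_scope.
From Stdlib Require Import Lra Lia Psatz ClassicalEpsilon FunctionalExtensionality.

Definition P (s e : R) : R := rpow (Rabs s) e.

Lemma P_0 e : P 0 e = 0.
Proof. unfold P, rpow. rewrite Rabs_R0. destruct (Req_EM_T 0 0); [reflexivity|lra]. Qed.

Lemma P_nz s e : s <> 0 -> P s e = Rpower (Rabs s) e.
Proof. intros H. unfold P, rpow. destruct (Req_EM_T (Rabs s) 0) as [E|E].
 - apply Rabs_eq_0 in E; lra.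
 - reflexivity. Qed.

Lemma P_pos_eq s e : 0 < s -> P s e = Rpower s e.
Proof. intros H. rewrite P_nz by lra. rewrite Rabs_pos_eq by lra. reflexivity. Qed.

Lemma P_gt0 s e : s <> 0 -> 0 < P s e.
Proof. intros H. rewrite P_nz by auto. unfold Rpower. apply exp_pos. Qed.

Lemma P_ge0 s e : 0 <= P s e.
Proof. destruct (Req_dec s 0) as [->|H]. rewrite P_0; lra. apply Rlt_le, P_gt0; auto. Qed.

Lemma P_mul s e1 e2 : P s e1 * P s e2 = P s (e1 + e2).
Proof. destruct (Req_dec s 0) as [->|H]. rewrite !P_0; ring.
 rewrite !P_nz by auto. rewrite Rpower_plus. ring. Qed.

Lemma P_1 s : P s 1 = Rabs s.
Proof. destruct (Req_dec s 0) as [->|H]. rewrite P_0, Rabs_R0; auto.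
 rewrite P_nz by auto. apply Rpower_1. apply Rabs_pos_lt; auto. Qed.

Lemma P_0e s : s <> 0 -> P s 0 = 1.
Proof. intros H. rewrite P_nz by auto. apply Rpower_O. apply Rabs_pos_lt; auto. Qed.

Lemma P_2 s : P s 2 = s ^ 2.
Proof. replace 2 with (1+1) by ring. rewrite <- P_mul, P_1.
 rewrite <- (Rsqr_abs s) at 1. unfold Rsqr. simpl. ring. Qed.

Lemma P_inv s e : s <> 0 -> P s (- e) = / P s e.
Proof. intros H. rewrite !P_nz by auto. unfold Rpower. rewrite <- exp_Ropp. f_equal. ring. Qed.

Lemma P_P s e1 e2 : P (P s e1) e2 = P s (e1 * e2).
Proof. destruct (Req_dec s 0) as [->|H]. rewrite !P_0; auto.
 assert (Hp := P_gt0 s e1 H). rewrite (P_pos_eq (P s e1)) by auto.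
 rewrite !P_nz by auto. apply Rpower_mult. Qed.

Lemma P_mult_distr s t e : P (s * t) e = P s e * P t e.
Proof. destruct (Req_dec s 0) as [->|H]. rewrite Rmult_0_l, !P_0; ring.
 destruct (Req_dec t 0) as [->|H']. rewrite Rmult_0_r, !P_0; ring.
 rewrite !P_nz; auto. rewrite Rabs_mult. rewrite Rpower_mult_distr; auto; apply Rabs_pos_lt; auto.
 Qed.

Lemma P_le s t e : 0 <= e -> 0 <= s <= t -> P s e <= P t e.
Proof. intros He Hs. destruct (Req_dec s 0) as [->|H]. rewrite P_0; apply P_ge0.
 rewrite !P_pos_eq by lra. apply Rle_Rpower_l; lra. Qed.

Lemma P_lt s t e : 0 < e -> 0 <= s < t -> P s e < P t e.
Proof. intros He Hs. destruct (Req_dec s 0) as [->|H]. rewrite P_0; apply P_gt0; lra.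
 rewrite !P_pos_eq by lra. apply Rlt_Rpower_l; lra. Qed.

Lemma P_exp t e : P (exp t) e = exp (e * t).
Proof. rewrite P_pos_eq by apply exp_pos. unfold Rpower. rewrite ln_exp. auto. Qed.

Lemma P_cont0 e : 0 < e -> continuity_pt (fun s => P s e) 0.
Proof. intros He. apply continuity_pt_filterlim. rewrite P_0.
 intros U [eps Heps]. exists (mkposreal (Rpower eps (/ e)) (exp_pos _)).
 intros y Hy. apply Heps. unfold ball in *; simpl in *. unfold AbsRing_ball, abs, minus, plus, opp in *; simpl in *.
 rewrite Ropp_0, Rplus_0_r in *. rewrite Rabs_pos_eq by apply P_ge0.
 destruct (Req_dec y 0) as [->|H]. rewrite P_0. apply cond_pos.
 rewrite P_nz by auto. replace (pos eps) with (Rpower (Rpower eps (/ e)) e).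
 apply Rlt_Rpower_l; auto. split. apply Rabs_pos_lt; auto. auto.
 rewrite Rpower_mult. rewrite Rinv_l by lra. apply Rpower_1, cond_pos. Qed.

Lemma loc_of (x d : R) (Q : R -> Prop) : 0 < d -> (forall y, Rabs (y - x) < d -> Q y) -> locally x Q.
Proof. intros Hd H. exists (mkposreal d Hd). intros y Hy. apply H. exact Hy. Qed.

Lemma P_deriv s e : 0 < s -> is_derive (fun s => P s e) s (e * P s (e - 1)).
Proof. intros Hs. apply is_derive_ext_loc with (f := fun s => Rpower s e).
 apply (loc_of s s); auto. intros y Hy. rewrite P_pos_eq; auto.
 apply Rabs_lt_between in Hy; lra.
 rewrite P_pos_eq by auto. apply is_derive_Reals, derivable_pt_lim_power; auto. Qed.

Lemma P_cont s e : 0 < e -> continuous (fun s => P s e) s.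
Proof. intros He. destruct (Req_dec s 0) as [->|H].
 apply continuity_pt_filterlim, P_cont0; auto.
 destruct (Rlt_or_le 0 s) as [Hs|Hs].
 apply (ex_derive_continuous (fun s => P s e)). eexists. apply P_deriv; auto.
 apply continuous_ext with (f := fun s => P (- s) e). intros; unfold P; rewrite Rabs_Ropp; auto.
 apply (continuous_comp (fun s => - s) (fun s => P s e)). apply continuity_pt_filterlim, continuity_pt_opp, continuity_pt_id.
 apply (ex_derive_continuous (fun s => P s e)). eexists. apply P_deriv; lra. Qed.


Lemma cont_eps f x : continuous f x -> forall eps, 0 < eps -> exists d, 0 < d /\ forall y, Rabs (y - x) < d -> Rabs (f y - f x) < eps.
Proof. intros Hc eps He. apply continuity_pt_filterlim in Hc.
 destruct (Hc eps He) as [d [Hd H]]. exists d; split; auto. intros y Hy.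
 destruct (Req_dec y x) as [ ->|Hn]. rewrite Rminus_diag, Rabs_R0; auto.
 apply H. split. split; [exact I|auto]. exact Hy. Qed.

Lemma exp_mono x y : x <= y -> exp x <= exp y.
Proof. intros [H| ->]. apply Rlt_le, exp_increasing; auto. lra. Qed.

Lemma isd_ext_val (f : R -> R) (x l1 l2 : R) : l2 = l1 -> is_derive f x l2 -> is_derive f x l1.
Proof. intros ->; auto. Qed.
Lemma isd_plus (f g : R -> R) (x df dg : R) : is_derive f x df -> is_derive g x dg -> is_derive (fun x => f x + g x) x (df + dg).
Proof. intros; apply (@is_derive_plus R_AbsRing R_NormedModule); auto. Qed.
Lemma isd_minus (f g : R -> R) (x df dg : R) : is_derive f x df -> is_derive g x dg -> is_derive (fun x => f x - g x) x (df - dg).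
Proof. intros; apply (@is_derive_minus R_AbsRing R_NormedModule); auto. Qed.
Lemma isd_mult (f g : R -> R) (x df dg : R) : is_derive f x df -> is_derive g x dg -> is_derive (fun x => f x * g x) x (df * g x + f x * dg).
Proof. intros; apply (@is_derive_mult R_AbsRing); auto. intros; apply Rmult_comm. Qed.
Lemma isd_scal (k : R) (f : R -> R) (x df : R) : is_derive f x df -> is_derive (fun x => k * f x) x (k * df).
Proof. intros; apply is_derive_scal; auto. Qed.
Lemma isd_comp (f g : R -> R) (x df dg : R) : is_derive f (g x) df -> is_derive g x dg -> is_derive (fun x => f (g x)) x (dg * df).
Proof. intros; apply (@is_derive_comp R_AbsRing R_NormedModule); auto. Qed.

Lemma cont_plus (f g : R -> R) (x : R) : continuous f x -> continuous g x -> continuous (fun x => f x + g x) x.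
Proof. intros H1 H2. apply continuity_pt_filterlim. apply continuity_pt_filterlim in H1, H2. apply continuity_pt_plus; auto. Qed.
Lemma cont_minus (f g : R -> R) (x : R) : continuous f x -> continuous g x -> continuous (fun x => f x - g x) x.
Proof. intros H1 H2. apply continuity_pt_filterlim. apply continuity_pt_filterlim in H1, H2. apply continuity_pt_minus; auto. Qed.
Lemma cont_mult (f g : R -> R) (x : R) : continuous f x -> continuous g x -> continuous (fun x => f x * g x) x.
Proof. intros H1 H2. apply continuity_pt_filterlim. apply continuity_pt_filterlim in H1, H2. apply continuity_pt_mult; auto. Qed.
Lemma cont_const (k : R) (x : R) : continuous (fun _ => k) x.
Proof. apply continuity_pt_filterlim. apply continuity_pt_const. intros u v; auto. Qed.
Lemma cont_id (x : R) : continuous (fun x : R => x) x.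
Proof. apply continuity_pt_filterlim. apply continuity_pt_id. Qed.
Lemma cont_scal (k : R) (f : R -> R) (x : R) : continuous f x -> continuous (fun x => k * f x) x.
Proof. intros; apply cont_mult; auto; apply cont_const. Qed.
Lemma cont_comp (f g : R -> R) (x : R) : continuous g x -> continuous f (g x) -> continuous (fun x => f (g x)) x.
Proof. intros H1 H2. apply (continuous_comp g f); auto. Qed.
Lemma cont_sqrt (f : R -> R) (x : R) : continuous f x -> continuous (fun x => sqrt (f x)) x.
Proof. intros H. apply (cont_comp sqrt f); auto. apply continuity_pt_filterlim.
 destruct (Rle_or_lt 0 (f x)). apply continuity_pt_sqrt; auto.
 apply continuity_pt_locally_ext with (a := - f x) (f := fun _ => 0). lra.
 intros y Hy. unfold Rdist in Hy. rewrite sqrt_neg_0; auto. apply Rabs_lt_between in Hy. lra.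
 apply continuity_pt_const; intros u v; auto. Qed.
Lemma cont_pow (f : R -> R) n (x : R) : continuous f x -> continuous (fun x => f x ^ n) x.
Proof. intros H. apply (cont_comp (fun y => y ^ n) f); auto. apply continuity_pt_filterlim. apply derivable_continuous_pt, derivable_pt_pow. Qed.

Lemma cont_inv (f : R -> R) (x : R) : continuous f x -> f x <> 0 -> continuous (fun x => / f x) x.
Proof. intros H1 H2. apply continuity_pt_filterlim. apply continuity_pt_filterlim in H1.
 apply (continuity_pt_inv f x H1 H2). Qed.
Lemma isd_sqrt (f : R -> R) (x df : R) : is_derive f x df -> 0 < f x -> is_derive (fun x => sqrt (f x)) x (df / (2 * sqrt (f x))).
Proof. intros H1 H2. apply isd_ext_val with (df * / (2 * sqrt (f x))). reflexivity.
 apply (isd_comp sqrt f x). apply is_derive_Reals, derivable_pt_lim_sqrt; auto. auto. Qed.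
Lemma isd_inv_aux (x : R) : x <> 0 -> derivable_pt_lim Rinv x (- / x ^ 2).
Proof. intros H. apply is_derive_Reals. auto_derive; auto. field; auto. Qed.
Lemma isd_inv (f : R -> R) (x df : R) : is_derive f x df -> f x <> 0 -> is_derive (fun x => / f x) x (- df / (f x) ^ 2).
Proof. intros H1 H2. apply isd_ext_val with (df * (- / (f x)^2)). field; auto.
 apply (isd_comp Rinv f x). apply is_derive_Reals. apply isd_inv_aux; auto. auto. Qed.
Lemma exR_cont (f : R -> R) (a b : R) : (forall z, Rmin a b <= z <= Rmax a b -> continuous f z) -> ex_RInt f a b.
Proof. intros H. apply (@ex_RInt_continuous R_CompleteNormedModule). exact H. Qed.
Lemma RInt_corr (f : R -> R) (a b : R) : ex_RInt f a b -> is_RInt f a b (RInt f a b).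
Proof. intros H. apply (@RInt_correct R_CompleteNormedModule). exact H. Qed.
Lemma RInt_deriv (f df : R -> R) (a b : R) :
  (forall x, Rmin a b <= x <= Rmax a b -> is_derive f x (df x)) ->
  (forall x, Rmin a b <= x <= Rmax a b -> continuous df x) -> RInt df a b = f b - f a.
Proof. intros H1 H2. apply (@is_RInt_unique R_CompleteNormedModule). apply (@is_RInt_derive R_CompleteNormedModule); auto. Qed.
Lemma RInt_Chas (f : R -> R) (a b c : R) : ex_RInt f a b -> ex_RInt f b c -> RInt f a b + RInt f b c = RInt f a c.
Proof. intros H1 H2. apply (@RInt_Chasles R_CompleteNormedModule); auto. Qed.
Lemma RInt_sw (f : R -> R) (a b : R) : ex_RInt f a b -> RInt f b a = - RInt f a b.
Proof. intros H. rewrite <- (@opp_RInt_swap R_CompleteNormedModule); auto. Qed.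
Lemma isd_const (k x : R) : is_derive (fun _ : R => k) x 0.
Proof. auto_derive; auto. Qed.
Lemma isd_id (x : R) : is_derive (fun y : R => y) x 1.
Proof. auto_derive; auto. Qed.
Lemma cont_of_eps (f : R -> R) (x : R) : (forall eps, 0 < eps -> exists d, 0 < d /\ forall y, Rabs (y - x) < d -> Rabs (f y - f x) < eps) -> continuous f x.
Proof. intros H. apply continuity_pt_filterlim. intros eps He. destruct (H eps He) as [d [Hd Hy]].
 exists d. split; auto. intros y [_ Hyd]. apply Hy. exact Hyd. Qed.

Lemma mono_darboux_cont (g : R -> R) :
  (forall x y, x <= y -> g y <= g x) ->
  (forall a b c, a < b -> g b <= c <= g a -> exists z, a <= z <= b /\ g z = c) ->
  forall x, continuous g x.
Proof. intros Hm Hd x0. apply cont_of_eps. intros eps He.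
 assert (L : exists d1, 0 < d1 /\ forall x, x0 - d1 < x <= x0 -> g x < g x0 + eps).
 { destruct (Rlt_or_le (g (x0 - 1)) (g x0 + eps)) as [H|H].
   - exists 1. split. lra. intros x Hx. assert (g x <= g (x0 - 1)) by (apply Hm; lra). lra.
   - destruct (Hd (x0 - 1) x0 (g x0 + eps/2)) as [z [Hz Ez]]. lra. lra.
     assert (z <> x0) by (intro; subst; lra).
     exists (x0 - z). split. lra. intros x Hx. assert (g x <= g z) by (apply Hm; lra). lra. }
 assert (R : exists d2, 0 < d2 /\ forall x, x0 <= x < x0 + d2 -> g x0 - eps < g x).
 { destruct (Rlt_or_le (g x0 - eps) (g (x0 + 1))) as [H|H].
   - exists 1. split. lra. intros x Hx. assert (g (x0 + 1) <= g x) by (apply Hm; lra). lra.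
   - destruct (Hd x0 (x0 + 1) (g x0 - eps/2)) as [z [Hz Ez]]. lra. lra.
     assert (z <> x0) by (intro; subst; lra).
     exists (z - x0). split. lra. intros x Hx. assert (g z <= g x) by (apply Hm; lra). lra. }
 destruct L as [d1 [Hd1 H1]]. destruct R as [d2 [Hd2 H2]].
 exists (Rmin d1 d2). split. apply Rmin_glb_lt; auto. intros y Hy.
 assert (Rmin d1 d2 <= d1) by apply Rmin_l. assert (Rmin d1 d2 <= d2) by apply Rmin_r.
 apply Rabs_lt_between in Hy. apply Rabs_def1.
 - destruct (Rle_or_lt y x0). specialize (H1 y ltac:(lra)). lra. assert (g y <= g x0) by (apply Hm; lra). lra.
 - destruct (Rle_or_lt y x0). assert (g x0 <= g y) by (apply Hm; lra). lra. specialize (H2 y ltac:(lra)). lra. Qed.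
Lemma inv_deriv (T g : R -> R) (x d : R) :
  continuous g x -> (exists r, 0 < r /\ forall x', Rabs (x' - x) < r -> T (g x') = x') ->
  is_derive T (g x) d -> d <> 0 -> is_derive g x (/ d).
Proof. intros Hc [r [Hr HT]] Hd Hd0. apply is_derive_Reals. apply is_derive_Reals in Hd.
 intros eps He.
 assert (hd : 0 < Rabs d) by (apply Rabs_pos_lt; auto).
 assert (he' : 0 < Rmin (Rabs d / 2) (eps * (Rabs d * Rabs d) / 2)). { apply Rmin_glb_lt. lra. apply Rdiv_lt_0_compat; [|lra]. apply Rmult_lt_0_compat; auto. apply Rmult_lt_0_compat; auto. }
 assert (he1 := Rmin_l (Rabs d / 2) (eps * (Rabs d * Rabs d) / 2)). assert (he2 := Rmin_r (Rabs d / 2) (eps * (Rabs d * Rabs d) / 2)).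
 revert he' he1 he2. generalize (Rmin (Rabs d / 2) (eps * (Rabs d * Rabs d) / 2)). intros e' he' he1 he2.
 destruct (Hd e' he') as [dT HdT].
 destruct (cont_eps g x Hc dT (cond_pos dT)) as [dg [Hdg Hg]].
 exists (mkposreal (Rmin dg r) (Rmin_glb_lt _ _ _ Hdg Hr)). intros k Hk0 Hk. simpl in Hk.
 assert (Hk1 : Rabs k < dg) by (apply Rlt_le_trans with (1 := Hk); apply Rmin_l).
 assert (Hk2 : Rabs k < r) by (apply Rlt_le_trans with (1 := Hk); apply Rmin_r).
 remember (g (x + k) - g x) as h eqn:Dh.
 assert (E1 : T (g (x + k)) = x + k) by (apply HT; replace (x + k - x) with k by ring; auto).
 assert (E0 : T (g x) = x) by (apply HT; rewrite Rminus_diag, Rabs_R0; auto).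
 assert (hh : h <> 0). { intro E. assert (g (x + k) = g x) by lra. rewrite H in E1. lra. }
 assert (hh2 : Rabs h < dT). { rewrite Dh. apply Hg. replace (x + k - x) with k by ring; auto. }
 specialize (HdT h hh hh2). replace (g x + h) with (g (x + k)) in HdT by (rewrite Dh; ring).
 rewrite E1, E0 in HdT. replace (x + k - x) with k in HdT by ring.
 remember (k / h) as q eqn:Dq.
 assert (Hq : Rabs q > Rabs d / 2). { assert (Rabs d <= Rabs q + Rabs (q - d)).
   replace d with (q - (q - d)) at 1 by ring. apply Rabs_triang_inv2 || (eapply Rle_trans; [apply Rabs_triang|]; rewrite Rabs_Ropp; lra).
   lra. }
 assert (hq0 : q <> 0) by (intro E; rewrite E, Rabs_R0 in Hq; lra).
 replace (h / k) with (/ q) by (rewrite Dq; field; auto).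
 replace (/ q - / d) with ((d - q) / (q * d)) by (field; auto).
 unfold Rdiv. rewrite Rabs_mult, Rabs_inv, Rabs_mult.
 rewrite <- Rabs_Ropp. replace (- (d - q)) with (q - d) by ring.
 apply Rlt_le_trans with (e' * / (Rabs q * Rabs d)).
 apply Rmult_lt_compat_r. apply Rinv_0_lt_compat. apply Rmult_lt_0_compat; lra. auto.
 apply Rle_trans with ((eps * (Rabs d * Rabs d) / 2) * / (Rabs d / 2 * Rabs d)).
 apply Rmult_le_compat; try lra. apply Rlt_le, Rinv_0_lt_compat. apply Rmult_lt_0_compat; lra.
 apply Rinv_le_contravar. apply Rmult_lt_0_compat; lra. apply Rmult_le_compat_r; lra.
 right. field. lra. Qed.
Lemma glue_pt (f g : R -> R) (c : R) :
  (forall x, continuous f x) -> continuous g c ->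
  (exists r, 0 < r /\ forall y, 0 < Rabs (y - c) < r -> is_derive f y (g y)) ->
  is_derive f c (g c).
Proof. intros Hf Hg [r [Hr Hd]]. apply is_derive_Reals. intros eps He.
 destruct (cont_eps g c Hg eps He) as [dg [Hdg Hgc]].
 exists (mkposreal (Rmin dg r) (Rmin_glb_lt _ _ _ Hdg Hr)). intros h Hh0 Hh. simpl in Hh.
 assert (Hh1 : Rabs h < dg) by (apply Rlt_le_trans with (1 := Hh); apply Rmin_l).
 assert (Hh2 : Rabs h < r) by (apply Rlt_le_trans with (1 := Hh); apply Rmin_r).
 destruct (MVT_gen f c (c + h) g) as [xi [Hxi E]].
 - intros x Hx. apply Hd. split.
   + apply Rabs_pos_lt. intro E. assert (x = c) by lra. subst x.
     destruct (Rle_or_lt 0 h). rewrite Rmin_left in Hx by lra. lra. rewrite Rmin_right in Hx by lra. rewrite Rmax_left in Hx by lra. lra.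
   + destruct (Rle_or_lt 0 h).
     rewrite Rmin_left, Rmax_right in Hx by lra. rewrite (Rabs_pos_eq h) in Hh2 by lra. rewrite Rabs_pos_eq by lra. lra.
     rewrite Rmin_right, Rmax_left in Hx by lra. rewrite (Rabs_left h) in Hh2 by lra. rewrite Rabs_left by lra. lra.
 - intros x _. apply continuity_pt_filterlim. apply Hf.
 - replace (c + h - c) with h in E by ring. rewrite E.
   replace (g xi * h / h) with (g xi) by (field; auto).
   apply Hgc. destruct (Rle_or_lt 0 h).
   rewrite Rmin_left, Rmax_right in Hxi by lra. rewrite (Rabs_pos_eq h) in Hh1 by lra. apply Rabs_lt_between. lra.
   rewrite Rmin_right, Rmax_left in Hxi by lra. rewrite (Rabs_left h) in Hh1 by lra. apply Rabs_lt_between. lra. Qed.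

Lemma glue (f g : R -> R) (L : R) : L <> 0 -> (forall x, continuous f x) -> (forall x, continuous g x) ->
  (forall x, x <> 0 -> Rabs x <> L -> is_derive f x (g x)) -> forall x, is_derive f x (g x).
Proof. intros HL Hf Hg Hd x.
 destruct (Req_dec x 0) as [E|E]; [|destruct (Req_dec (Rabs x) L) as [E'|E']]; [| |apply Hd; auto].
 - subst. apply glue_pt; auto. exists (Rabs L). split. apply Rabs_pos_lt; auto.
   intros y [H1 H2]. rewrite Rminus_0_r in *. apply Hd. intro; subst; rewrite Rabs_R0 in H1; lra.
   intro E. rewrite <- E in H2. rewrite Rabs_Rabsolu in H2. lra.
 - apply glue_pt; auto. exists (Rabs L). split. apply Rabs_pos_lt; auto.
   intros y [H1 H2]. apply Hd.
   + intro Hy0. rewrite Hy0 in H2. rewrite Rminus_0_l, Rabs_Ropp, E' in H2.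
     assert (0 <= L) by (rewrite <- E'; apply Rabs_pos). rewrite Rabs_pos_eq in H2 by lra. lra.
   + intro E2. rewrite <- E2 in H2. rewrite Rabs_Rabsolu in H2. rewrite <- E' in E2.
     assert (Ey : y = x \/ y = - x) by (revert E2; unfold Rabs; destruct (Rcase_abs y), (Rcase_abs x); intros; lra).
     destruct Ey as [ -> | -> ]. rewrite Rminus_diag, Rabs_R0 in H1; lra.
     revert H2; unfold Rabs; destruct (Rcase_abs (- x - x)), (Rcase_abs (- x)); intros; lra. Qed.

Lemma deriv_loc0 (f : R -> R) (x l : R) : (exists r, 0 < r /\ forall y, Rabs (y - x) < r -> f y = 0) -> l = 0 -> is_derive f x l.
Proof. intros [r [Hr H]] ->. apply is_derive_ext_loc with (f := fun _ => 0).
 apply (loc_of x r); auto. intros y Hy. symmetry; auto. apply isd_const. Qed.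
Lemma cont_ext (f g : R -> R) (x : R) : (forall t : R, f t = g t) -> continuous f x -> continuous g x.
Proof. intros H. apply continuous_ext. exact H. Qed.
Lemma isd_ext (f g : R -> R) (x l : R) : (forall t : R, f t = g t) -> is_derive f x l -> is_derive g x l.
Proof. intros H. apply is_derive_ext. exact H. Qed.
Lemma isd_C (f g : R -> R) (x df dg : R) : is_derive f x df -> is_derive g x dg -> is_derive (fun t => ((f t, g t) : C)) x ((df, dg) : C).
Proof. intros Hf Hg. unfold is_derive in *.
 apply (filterdiff_comp'_2 f g (fun u v => (u, v)) x (fun y => scal y df) (fun y => scal y dg) (fun u v => (u,v)) Hf Hg).
 apply filterdiff_ext_lin with (fun t => t).
 apply filterdiff_ext with (fun t => t). intros [u v]; reflexivity. apply filterdiff_id.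
 intros [u v]; reflexivity. Qed.
Lemma isd_C_ext (F : R -> C) (f g : R -> R) (x df dg : R) : (forall t, F t = (f t, g t)) ->
  is_derive f x df -> is_derive g x dg -> is_derive F x ((df, dg) : C).
Proof. intros E Hf Hg. apply is_derive_ext with (f := fun t => ((f t, g t) : C)). intros t; rewrite E; auto.
 apply isd_C; auto. Qed.

Section Model.
Variables p a b w : R.
Hypothesis hp : -1 < p <= 2/3.
Hypothesis ha : 0 < a.
Hypothesis hb : 0 < b.
Hypothesis hw : 0 < w.
Hypothesis hab : p = 2/3 -> a < b.

Definition G s := w * s + a * P s (p + 1) - b * P s (5/3).
Definition F s := w * s ^ 2 / 2 + a / (p + 2) * P s (p + 2) - 3 * b / 8 * P s (8/3).
Definition hh s := w / 2 + a / (p + 2) * P s p - 3 * b / 8 * P s (2/3).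

Lemma F_eq s : F s = s ^ 2 * hh s.
Proof. unfold F, hh. rewrite <- P_2. replace (p + 2) with (2 + p) by ring.
 replace (8/3) with (2 + 2/3) by field. rewrite <- !P_mul. field. lra. Qed.

Lemma F_deriv s : 0 < s -> is_derive F s (G s).
Proof. intros Hs. unfold F, G.
 assert (H1: is_derive (fun s => w*s^2/2) s (w*s)). auto_derive. auto. field.
 assert (H2: is_derive (fun s => a/(p+2)*P s (p+2)) s (a * P s (p+1))).
 { apply isd_ext_val with (a/(p+2) * ((p+2) * P s (p+2-1))).
   replace (p + 2 - 1) with (p + 1) by ring. field. lra.
   apply isd_scal. apply P_deriv; auto. }
 assert (H3: is_derive (fun s => 3*b/8*P s (8/3)) s (b * P s (5/3))).
 { apply isd_ext_val with (3*b/8 * ((8/3) * P s (8/3-1))).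
   replace (8/3 - 1) with (5/3) by field. field.
   apply isd_scal. apply P_deriv; auto. }
 apply isd_minus; auto. apply isd_plus; auto. Qed.

Lemma F_cont s : continuous F s.
Proof. unfold F. apply cont_minus. apply cont_plus.
 apply cont_mult. apply cont_scal, cont_pow, cont_id. apply cont_const.
 apply cont_scal. apply P_cont; lra. apply cont_scal. apply P_cont; lra. Qed.

Lemma G_cont s : continuous G s.
Proof. unfold G. apply cont_minus. apply cont_plus.
 apply cont_scal, cont_id.
 apply cont_scal. apply P_cont; lra. apply cont_scal. apply P_cont; lra. Qed.

Lemma F_0 : F 0 = 0.
Proof. unfold F. rewrite !P_0. field. lra. Qed.
Lemma G_0 : G 0 = 0.
Proof. unfold G. rewrite !P_0. ring. Qed.

Lemma exists_neg : exists s1, 0 < s1 /\ F s1 < 0.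
Proof.
 assert (H : exists t, hh (exp t) < 0).
 { destruct (Req_dec p (2/3)) as [E|E].
   - specialize (hab E). set (t := 3/2 * Rabs (ln (4 * w / (3 * (b - a)))) + 1).
     exists t. unfold hh. rewrite !P_exp. rewrite E.
     assert (exp (2/3 * t) > 4 * w / (3 * (b - a))).
     { rewrite <- (exp_ln (4 * w / (3 * (b - a)))). apply exp_increasing.
       unfold t. assert (H1 := Rle_abs (ln (4 * w / (3 * (b - a))))). lra.
       apply Rdiv_lt_0_compat; lra. }
     replace (exp (2 / 3 * t)) with (exp (2/3*t)) in * by auto.
     set (X := exp (2/3*t)) in *.
     assert (HX: 3 * (b - a) * X > 4 * w).
     { apply Rmult_gt_compat_l with (r := 3 * (b-a)) in H; [|lra].
       replace (3 * (b - a) * (4 * w / (3 * (b - a)))) with (4*w) in H by (field; lra). lra. }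
     replace (a / (2/3 + 2)) with (3 * a / 8) by field. nra.
   - assert (hq : 0 < 2/3 - p) by lra. set (q := 2/3 - p) in *. assert (Eq : q = 2/3 - p) by reflexivity. clearbody q.
     set (K := 8 * a / ((p + 2) * b)). assert (EK : K = 8 * a / ((p + 2) * b)) by reflexivity. clearbody K.
     assert (hK : 0 < K) by (rewrite EK; apply Rdiv_lt_0_compat; nra).
     set (t := Rabs (ln K) / q + 3/2 * Rabs (ln (2 * w / b)) + 1). assert (Et : t = Rabs (ln K) / q + 3/2 * Rabs (ln (2 * w / b)) + 1) by reflexivity. clearbody t.
     assert (ht1 : q * t >= ln K).
     { rewrite Et. assert (H1 := Rle_abs (ln K)). assert (0 <= Rabs (ln (2*w/b))) by apply Rabs_pos.
       set (A := Rabs (ln K)) in *. set (B := Rabs (ln (2 * w / b))) in *. clearbody A B.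
       replace (q * (A / q + 3 / 2 * B + 1)) with (A + q * (3 / 2 * B + 1)).
       assert (0 < q * (3/2*B+1)) by (apply Rmult_lt_0_compat; lra). lra.
       field. lra. }
     assert (ht2 : 2/3 * t > ln (2 * w / b)).
     { rewrite Et. assert (H1 := Rle_abs (ln (2*w/b))). assert (0 <= Rabs (ln K)) by apply Rabs_pos.
       assert (0 <= Rabs (ln K) / q) by (apply Rdiv_le_0_compat; lra). lra. }
     exists t. unfold hh. rewrite !P_exp.
     assert (E1 : exp (p * t) = exp (2/3 * t) * exp (- (q * t))).
     { rewrite <- exp_plus. f_equal. rewrite Eq. ring. }
     assert (E2 : exp (- (q * t)) <= / K).
     { rewrite <- (exp_ln K) by auto. rewrite <- exp_Ropp. apply exp_mono. lra. }
     assert (E3 : exp (2/3 * t) > 2 * w / b).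
     { rewrite <- (exp_ln (2 * w / b)). apply exp_increasing. lra. apply Rdiv_lt_0_compat; lra. }
     rewrite E1. set (X := exp (2/3 * t)) in *. set (Y := exp (- (q * t))) in *.
     assert (hY : 0 < Y) by apply exp_pos.
     assert (a / (p + 2) * (X * Y) <= b * X / 8).
     { assert (a / (p+2) * Y <= b / 8).
       { apply Rmult_le_compat_l with (r := a / (p+2)) in E2.
         replace (a / (p + 2) * / K) with (b / 8) in E2. lra. rewrite EK. field. split; lra.
         apply Rlt_le, Rdiv_lt_0_compat; lra. }
       assert (0 < X) by apply exp_pos. nra. }
     assert (w / 2 < b * X / 4).
     { apply Rmult_lt_compat_l with (r := b/4) in E3; [|lra].
       replace (b / 4 * (2 * w / b)) with (w/2) in E3 by (field; lra). lra. }
     lra. }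
 destruct H as [t Ht]. exists (exp t). split. apply exp_pos. rewrite F_eq.
 assert (0 < exp t ^ 2) by (apply pow_lt, exp_pos). nra. Qed.


Lemma F_pos_small : exists d, 0 < d /\ forall u, 0 < u < d -> 0 < F u.
Proof.
 destruct (cont_eps (fun s => P s (2/3)) 0 (P_cont 0 (2/3) ltac:(lra)) (4 * w / (3 * b))) as [d [Hd H]].
 apply Rdiv_lt_0_compat; lra.
 exists d; split; auto. intros u Hu. rewrite F_eq. apply Rmult_lt_0_compat. apply pow_lt; lra.
 specialize (H u). rewrite P_0, !Rminus_0_r in H. rewrite Rabs_pos_eq in H by lra.
 rewrite Rabs_pos_eq in H by apply P_ge0. specialize (H (proj2 Hu)).
 unfold hh. assert (0 <= a / (p+2) * P u p). apply Rmult_le_pos. apply Rlt_le, Rdiv_lt_0_compat; lra. apply P_ge0.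
 assert (3 * b / 8 * P u (2/3) < 3 * b / 8 * (4 * w / (3 * b))). apply Rmult_lt_compat_l; lra.
 replace (3 * b / 8 * (4 * w / (3 * b))) with (w/2) in H1 by (field; lra). lra. Qed.

Definition Eset s := 0 <= s /\ forall u, 0 < u <= s -> 0 < F u.

Lemma Eset_bound : bound Eset.
Proof. destruct exists_neg as [s1 [H1 H2]]. exists s1. intros s [Hs H].
 destruct (Rle_or_lt s s1); auto. specialize (H s1). lra. Qed.

Lemma Eset_ne : exists x, Eset x.
Proof. exists 0. split. lra. intros; lra. Qed.

Definition phi0 : R := proj1_sig (completeness Eset Eset_bound Eset_ne).

Lemma phi0_lub : is_lub Eset phi0.
Proof. unfold phi0. destruct (completeness Eset Eset_bound Eset_ne); auto. Qed.

Lemma phi0_pos : 0 < phi0.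
Proof. destruct F_pos_small as [d [Hd H]]. assert (Eset (d/2)).
 split. lra. intros u Hu. apply H. lra.
 destruct phi0_lub as [H1 _]. specialize (H1 _ H0). lra. Qed.

Lemma F_pos_below u : 0 < u < phi0 -> 0 < F u.
Proof. intros Hu. destruct phi0_lub as [H1 H2].
 destruct (Classical_Prop.classic (exists s, Eset s /\ u < s)) as [[s [[_ Hs] Hus]]|N].
 apply Hs; lra.
 assert (is_upper_bound Eset u). intros s Hs. destruct (Rle_or_lt s u); auto. exfalso; apply N; exists s; auto.
 specialize (H2 _ H). lra. Qed.

Lemma F_phi0 : F phi0 = 0.
Proof. destruct (Rtotal_order (F phi0) 0) as [Hn|[He|Hp]]; auto; exfalso.
 - destruct (cont_eps F phi0 (F_cont phi0) (- F phi0)) as [d [Hd H]]. lra.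
   set (u := Rmax (phi0/2) (phi0 - d/2)).
   assert (phi0/2 <= u) by apply Rmax_l. assert (phi0 - d/2 <= u) by apply Rmax_r.
   assert (u < phi0). { unfold u; apply Rmax_lub_lt; assert (hh0 := phi0_pos); lra. }
   assert (0 < F u) by (apply F_pos_below; assert (hh0 := phi0_pos); lra).
   specialize (H u). assert (Rabs (u - phi0) < d). rewrite Rabs_left by lra. lra.
   specialize (H H4). apply Rabs_lt_between in H. lra.
 - destruct (cont_eps F phi0 (F_cont phi0) (F phi0)) as [d [Hd H]]. lra.
   assert (Eset (phi0 + d/2)). split. assert (hh0 := phi0_pos); lra.
   intros u Hu. destruct (Rlt_or_le u phi0). apply F_pos_below; lra.
   specialize (H u). assert (Rabs (u - phi0) < d). rewrite Rabs_pos_eq by lra. lra.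
   specialize (H H1). apply Rabs_lt_between in H. lra.
   destruct phi0_lub as [H1 _]. specialize (H1 _ H0). lra. Qed.

Lemma G_phi0 : G phi0 < 0.
Proof. assert (h0 := phi0_pos). assert (E := F_phi0). rewrite F_eq in E.
 assert (Eh : hh phi0 = 0). { assert (0 < phi0 ^ 2) by (apply pow_lt; lra). apply Rmult_integral in E. destruct E; auto. lra. }
 unfold hh, G in *.
 replace (p + 1) with (1 + p) by ring. replace (5/3) with (1 + 2/3) by field.
 rewrite <- !P_mul. rewrite P_1. rewrite Rabs_pos_eq by lra.
 assert (hX := P_gt0 phi0 p ltac:(lra)). assert (hY := P_gt0 phi0 (2/3) ltac:(lra)).
 set (X := P phi0 p) in *. set (Y := P phi0 (2/3)) in *. clearbody X Y.
 assert (K : w + a * X - b * Y < 0).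
 { destruct (Rle_or_lt p 0) as [Hp|Hp].
   - assert (Ew : w = 3 * b * Y / 4 - 2 * a * X / (p + 2)).
     { apply (Rmult_eq_reg_l (1/2)); [|lra]. replace (1/2 * w) with (w/2) by field.
       replace (w/2) with (3 * b / 8 * Y - a / (p + 2) * X) by lra. field. lra. }
     rewrite Ew. replace (3 * b * Y / 4 - 2 * a * X / (p + 2) + a * X - b * Y) with (- (b * Y / 4) + a * X * (p / (p+2))) by (field; lra).
     assert (a * X * (p / (p + 2)) <= 0). { assert (0 < / (p+2)) by (apply Rinv_0_lt_compat; lra). assert (0 < a * X) by nra. unfold Rdiv. assert (p * / (p+2) <= 0) by nra. nra. }
     nra.
   - assert (EaX : a * X = (p + 2) * (3 * b * Y / 8 - w / 2)).
     { replace (3 * b * Y / 8 - w / 2) with (a / (p + 2) * X) by lra. field. lra. }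
     rewrite EaX. replace (w + (p + 2) * (3 * b * Y / 8 - w / 2) - b * Y) with (- (p * w / 2) + b * Y * (3 * p - 2) / 8) by field.
     assert (b * Y * (3 * p - 2) / 8 <= 0). { assert (0 < b * Y) by nra. assert (3*p - 2 <= 0) by lra. 
       assert (b * Y * (3 * p - 2) <= 0) by nra. lra. }
     nra. }
 nra. Qed.

Definition Sfun s := sqrt (2 * F s).

Lemma S_pos s : 0 < s < phi0 -> 0 < Sfun s.
Proof. intros H. unfold Sfun. apply sqrt_lt_R0. assert (0 < F s) by (apply F_pos_below; auto). lra. Qed.

Lemma S_deriv s : 0 < s < phi0 -> is_derive Sfun s (G s / Sfun s).
Proof. intros H. unfold Sfun. assert (0 < F s) by (apply F_pos_below; auto).
 apply isd_ext_val with (2 * G s / (2 * sqrt (2 * F s))). field. apply Rgt_not_eq, sqrt_lt_R0; lra.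
 apply (isd_sqrt (fun s => 2 * F s)). apply isd_scal, F_deriv; lra. lra. Qed.

Lemma S_cont s : continuous Sfun s.
Proof. unfold Sfun. apply cont_sqrt. apply cont_scal, F_cont. Qed.

Lemma S_phi0 : Sfun phi0 = 0.
Proof. unfold Sfun. rewrite F_phi0, Rmult_0_r. apply sqrt_0. Qed.
Lemma S_0 : Sfun 0 = 0.
Proof. unfold Sfun. rewrite F_0, Rmult_0_r. apply sqrt_0. Qed.

Lemma top_bound : exists y0 c, 0 < y0 < phi0 /\ 0 < c /\ forall s, y0 <= s <= phi0 -> c * (phi0 - s) <= F s.
Proof. assert (h0 := phi0_pos). assert (hg := G_phi0).
 destruct (cont_eps G phi0 (G_cont phi0) (- G phi0 / 2)) as [d [Hd H]]. lra.
 set (y0 := Rmax (phi0/2) (phi0 - d/2)).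
 assert (phi0/2 <= y0) by apply Rmax_l. assert (phi0 - d/2 <= y0) by apply Rmax_r.
 assert (y0 < phi0). { unfold y0; apply Rmax_lub_lt; lra. }
 clearbody y0.
 exists y0, (- G phi0 / 2). split. lra. split. lra.
 intros s Hs. destruct (Req_dec s phi0) as [->|Hne]. rewrite F_phi0. lra.
 destruct (MVT_cor2 F G s phi0) as [xi [E Hxi]]. lra.
 intros c Hc. apply is_derive_Reals, F_deriv. lra.
 rewrite F_phi0 in E. specialize (H xi). assert (Rabs (xi - phi0) < d) by (rewrite Rabs_left; lra).
 specialize (H H3). apply Rabs_lt_between in H.
 assert (G xi < G phi0 / 2) by lra. assert (0 < phi0 - s) by lra. nra. Qed.

Lemma bottom_bound_neg : p < 0 -> exists y1 c1, 0 < y1 < phi0 /\ 0 < c1 /\ forall s, 0 < s <= y1 -> c1 * P s (p + 2) <= F s.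
Proof. intros Hp. assert (h0 := phi0_pos).
 destruct (cont_eps (fun s => P s (2/3 - p)) 0 (P_cont 0 (2/3 - p) ltac:(lra)) (4 * a / (3 * b * (p + 2)))) as [d [Hd H]].
 apply Rdiv_lt_0_compat; nra.
 exists (Rmin (d/2) (phi0/2)), (a / (2 * (p + 2))).
 assert (Rmin (d/2) (phi0/2) <= d/2) by apply Rmin_l. assert (Rmin (d/2) (phi0/2) <= phi0/2) by apply Rmin_r.
 assert (0 < Rmin (d/2) (phi0/2)) by (apply Rmin_glb_lt; lra).
 split. lra. split. apply Rdiv_lt_0_compat; lra.
 intros s Hs. specialize (H s). rewrite P_0, !Rminus_0_r, Rabs_pos_eq in H by lra.
 rewrite Rabs_pos_eq in H by apply P_ge0. specialize (H ltac:(lra)).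
 assert (EF : F s = P s (p + 2) * (w / 2 * P s (- p) + a / (p + 2) - 3 * b / 8 * P s (2/3 - p))).
 { assert (M1 : P s (p + 2) * P s (- p) = s ^ 2) by (rewrite P_mul, <- P_2; f_equal; ring).
   assert (M2 : P s (p + 2) * P s (2/3 - p) = P s (8/3)) by (rewrite P_mul; f_equal; field).
   unfold F. rewrite <- M1, <- M2. field. lra. }
 rewrite EF. assert (hP := P_gt0 s (p + 2) ltac:(lra)).
 assert (0 <= w / 2 * P s (- p)) by (assert (0 <= P s (-p)) by apply P_ge0; nra).
 assert (3 * b / 8 * P s (2 / 3 - p) < 3 * b / 8 * (4 * a / (3 * b * (p + 2)))) by (apply Rmult_lt_compat_l; lra).
 replace (3 * b / 8 * (4 * a / (3 * b * (p + 2)))) with (a / (2 * (p + 2))) in H4 by (field; lra).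
 assert (a / (p + 2) = 2 * (a / (2 * (p + 2)))) by (field; lra).
 set (X := w / 2 * P s (- p) + a / (p + 2) - 3 * b / 8 * P s (2 / 3 - p)).
 assert (a / (2 * (p + 2)) <= X) by (unfold X; lra).
 rewrite (Rmult_comm (P s (p + 2)) X). apply Rmult_le_compat_r; lra. Qed.

Definition Cpos := w / 2 + a / (p + 2) * P phi0 p.

Lemma Cpos_pos : 0 < Cpos.
Proof. unfold Cpos. assert (0 <= a / (p+2) * P phi0 p). apply Rmult_le_pos. apply Rlt_le, Rdiv_lt_0_compat; lra. apply P_ge0. lra. Qed.

Lemma bound_pos : 0 <= p -> forall s, 0 < s <= phi0 -> F s <= Cpos * s ^ 2.
Proof. intros Hp s Hs. rewrite F_eq. rewrite Rmult_comm. apply Rmult_le_compat_r. apply pow2_ge_0.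
 unfold hh, Cpos. assert (P s p <= P phi0 p) by (apply P_le; lra).
 assert (0 <= P s (2/3)) by apply P_ge0.
 assert (a / (p + 2) * P s p <= a / (p + 2) * P phi0 p). apply Rmult_le_compat_l; auto. apply Rlt_le, Rdiv_lt_0_compat; lra.
 assert (0 <= 3 * b / 8 * P s (2/3)) by (apply Rmult_le_pos; lra). lra. Qed.

Lemma top_bound' : exists y0, 0 < y0 < phi0 /\ exists c, 0 < c /\ forall s, y0 <= s <= phi0 -> c * (phi0 - s) <= F s.
Proof. destruct top_bound as [y0 [c [H1 [H2 H3]]]]. exists y0; split; auto. exists c; auto. Qed.

Definition y0 := proj1_sig (constructive_indefinite_description _ top_bound').
Lemma y0_prop : 0 < y0 < phi0 /\ exists c, 0 < c /\ forall s, y0 <= s <= phi0 -> c * (phi0 - s) <= F s.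
Proof. unfold y0. destruct constructive_indefinite_description; auto. Qed.

Definition fi s := / Sfun s.

Lemma fi_pos s : 0 < s < phi0 -> 0 < fi s.
Proof. intros; apply Rinv_0_lt_compat, S_pos; auto. Qed.

Lemma fi_cont s : 0 < s < phi0 -> continuous fi s.
Proof. intros H. apply cont_inv. apply S_cont. apply Rgt_not_eq, S_pos; auto. Qed.

Lemma fi_ex u v : 0 < u < phi0 -> 0 < v < phi0 -> ex_RInt fi u v.
Proof. intros Hu Hv. apply exR_cont. intros z Hz. apply fi_cont.
 assert (Rmin u v > 0) by (apply Rmin_glb_lt; lra). assert (Rmax u v < phi0) by (apply Rmax_lub_lt; lra). lra. Qed.

Definition Iint y := RInt fi y0 y.

Lemma I_deriv y : 0 < y < phi0 -> is_derive Iint y (fi y).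
Proof. intros Hy. destruct y0_prop as [Hy0 _]. apply (@is_derive_RInt R_CompleteNormedModule fi Iint y0 y).
 apply (loc_of y (Rmin y (phi0 - y))). apply Rmin_glb_lt; lra.
 intros z Hz. assert (Rmin y (phi0 - y) <= y) by apply Rmin_l. assert (Rmin y (phi0 - y) <= phi0 - y) by apply Rmin_r.
 apply Rabs_lt_between in Hz. apply RInt_corr, fi_ex; lra.
 apply fi_cont; auto. Qed.

Lemma I_incr u v : 0 < u < v -> v < phi0 -> Iint u < Iint v.
Proof. intros Hu Hv. destruct (MVT_cor2 Iint fi u v) as [xi [E Hxi]]. lra.
 intros c Hc. apply is_derive_Reals, I_deriv. lra.
 assert (0 < fi xi) by (apply fi_pos; lra). nra. Qed.

Lemma I_bound : exists B, forall y, y0 <= y < phi0 -> Iint y <= B.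
Proof. destruct y0_prop as [Hy0 [c [Hc Hb]]].
 assert (hk : 0 < sqrt (2 * c)) by (apply sqrt_lt_R0; lra).
 set (A := fun s => - 2 / sqrt (2 * c) * sqrt (phi0 - s)).
 set (g := fun s => / (sqrt (2 * c) * sqrt (phi0 - s))).
 exists (- A y0). intros y Hy. unfold Iint.
 assert (Hg : forall s, y0 <= s <= y -> is_derive A s (g s) /\ continuous g s).
 { intros s Hs. assert (0 < sqrt (phi0 - s)) by (apply sqrt_lt_R0; lra). split.
   - unfold A, g. apply isd_ext_val with (- 2 / sqrt (2 * c) * (- 1 / (2 * sqrt (phi0 - s)))).
     field; lra. apply isd_scal. apply (isd_sqrt (fun s => phi0 - s)). auto_derive; auto. lra.
   - unfold g. apply cont_inv. apply cont_scal. apply cont_sqrt. apply cont_minus. apply cont_const. apply cont_id.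
     apply Rgt_not_eq, Rmult_lt_0_compat; lra. }
 assert (EA : RInt g y0 y = A y - A y0).
 { apply (RInt_deriv A g). intros x Hx. rewrite Rmin_left, Rmax_right in Hx by lra. apply Hg; lra.
   intros x Hx. rewrite Rmin_left, Rmax_right in Hx by lra. apply Hg; lra. }
 assert (A y <= 0). { unfold A. assert (0 <= sqrt (phi0 - y)) by apply sqrt_pos.
   assert (0 < 2 / sqrt (2 * c)) by (apply Rdiv_lt_0_compat; lra). nra. }
 apply Rle_trans with (RInt g y0 y); [|lra].
 apply RInt_le. lra. apply fi_ex; lra.
 apply exR_cont. intros z Hz. rewrite Rmin_left, Rmax_right in Hz by lra. apply Hg; lra.
 intros x Hx. unfold fi, g. apply Rinv_le_contravar.
 apply Rmult_lt_0_compat; auto. apply sqrt_lt_R0; lra.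
 unfold Sfun. rewrite <- sqrt_mult by lra. apply sqrt_le_1_alt. assert (c * (phi0 - x) <= F x) by (apply Hb; lra). lra. Qed.

Definition Iset z := exists y, y0 <= y < phi0 /\ z = Iint y.
Lemma Iset_bound : bound Iset.
Proof. destruct I_bound as [B HB]. exists B. intros z [y [Hy ->]]. apply HB; auto. Qed.
Lemma Iset_ne : exists z, Iset z.
Proof. destruct y0_prop as [Hy0 _]. exists (Iint y0). exists y0. split; auto; lra. Qed.
Definition Ttop : R := proj1_sig (completeness Iset Iset_bound Iset_ne).
Lemma Ttop_lub : is_lub Iset Ttop.
Proof. unfold Ttop. destruct completeness; auto. Qed.

Definition T y := Ttop - Iint y.

Lemma T_pos y : 0 < y < phi0 -> 0 < T y.
Proof. intros Hy. destruct y0_prop as [Hy0 _]. destruct Ttop_lub as [H1 _]. unfold T.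
 set (y' := Rmax y0 ((y + phi0)/2)). assert (y0 <= y') by apply Rmax_l. assert ((y+phi0)/2 <= y') by apply Rmax_r.
 assert (y' < phi0) by (apply Rmax_lub_lt; lra). clearbody y'.
 assert (Iint y < Iint y') by (apply I_incr; lra). assert (Iint y' <= Ttop) by (apply H1; exists y'; split; auto; lra). lra. Qed.

Lemma T_small eps : 0 < eps -> exists y, 0 < y < phi0 /\ T y < eps.
Proof. intros He. destruct y0_prop as [Hy0 _]. destruct Ttop_lub as [H1 H2].
 destruct (Classical_Prop.classic (exists y, y0 <= y < phi0 /\ Ttop - eps < Iint y)) as [[y [Hy Hl]]|N].
 exists y. split. lra. unfold T; lra.
 assert (is_upper_bound Iset (Ttop - eps)). { intros z [y [Hy ->]]. destruct (Rle_or_lt (Iint y) (Ttop - eps)); auto. exfalso; apply N; exists y; auto. }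
 specialize (H2 _ H). lra. Qed.

Lemma T_decr u v : 0 < u < v -> v < phi0 -> T v < T u.
Proof. intros; unfold T. assert (Iint u < Iint v) by (apply I_incr; auto). lra. Qed.

Lemma T_deriv y : 0 < y < phi0 -> is_derive T y (- fi y).
Proof. intros Hy. unfold T. apply isd_ext_val with (0 - fi y). ring. apply isd_minus. apply isd_const. apply I_deriv; auto. Qed.

Lemma T_cont y : 0 < y < phi0 -> continuous T y.
Proof. intros Hy. apply (ex_derive_continuous T). eexists; apply T_deriv; auto. Qed.

Lemma T_eq_low y z : 0 < y <= z -> z < phi0 -> T y = Ttop + RInt fi y z + RInt fi z y0.
Proof. intros Hy Hz. destruct y0_prop as [Hy0 _]. unfold T, Iint.
 rewrite (RInt_sw fi y y0) by (apply fi_ex; lra).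
 rewrite <- (RInt_Chas fi y z y0) by (apply fi_ex; lra). ring. Qed.

Lemma T_bounded : p < 0 -> exists M, forall y, 0 < y < phi0 -> T y <= M.
Proof. intros Hp. destruct (bottom_bound_neg Hp) as [y1 [c1 [Hy1 [Hc1 Hb]]]].
 destruct y0_prop as [Hy0 _].
 set (y2 := Rmin y1 y0). assert (y2 <= y1) by apply Rmin_l. assert (y2 <= y0) by apply Rmin_r.
 assert (0 < y2) by (apply Rmin_glb_lt; lra). clearbody y2.
 assert (hk : 0 < sqrt (2 * c1)) by (apply sqrt_lt_R0; lra).
 set (A2 := fun s => / ((- p / 2) * sqrt (2 * c1)) * P s (- p / 2)).
 set (g2 := fun s => / (sqrt (2 * c1) * P s ((p + 2) / 2))).
 assert (key : forall y, 0 < y <= y2 -> T y <= Ttop + A2 y2 + RInt fi y2 y0).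
 { intros y Hy. rewrite (T_eq_low y y2) by lra.
   assert (Hg : forall s, y <= s <= y2 -> is_derive A2 s (g2 s) /\ continuous g2 s).
   { intros s Hs. split.
     - unfold A2, g2. apply isd_ext_val with (/ ((- p / 2) * sqrt (2 * c1)) * ((- p / 2) * P s (- p / 2 - 1))).
       replace (- p / 2 - 1) with (- ((p + 2) / 2)) by field. rewrite P_inv by lra.
       field. split. apply Rgt_not_eq, P_gt0; lra. split; lra.
       apply isd_scal. apply P_deriv; lra.
     - unfold g2. apply cont_inv. apply cont_scal. apply P_cont; lra.
       apply Rgt_not_eq, Rmult_lt_0_compat; auto. apply P_gt0; lra. }
   assert (EA : RInt g2 y y2 = A2 y2 - A2 y).
   { apply (RInt_deriv A2 g2). intros x Hx. rewrite Rmin_left, Rmax_right in Hx by lra. apply Hg; lra.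
     intros x Hx. rewrite Rmin_left, Rmax_right in Hx by lra. apply Hg; lra. }
   assert (0 <= A2 y). { unfold A2. apply Rmult_le_pos. apply Rlt_le, Rinv_0_lt_compat, Rmult_lt_0_compat; lra. apply P_ge0. }
   assert (RInt fi y y2 <= RInt g2 y y2).
   { apply RInt_le. lra. apply fi_ex; lra.
     apply exR_cont. intros z Hz. rewrite Rmin_left, Rmax_right in Hz by lra. apply Hg; lra.
     intros x Hx. unfold fi, g2. apply Rinv_le_contravar.
     apply Rmult_lt_0_compat; auto. apply P_gt0; lra.
     unfold Sfun. assert (EP : P x (p + 2) = P x ((p + 2) / 2) * P x ((p + 2) / 2)) by (rewrite P_mul; f_equal; field).
     assert (c1 * P x (p + 2) <= F x) by (apply Hb; lra).
     rewrite <- (sqrt_square (P x ((p + 2) / 2))) by apply P_ge0. rewrite <- EP.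
     rewrite <- sqrt_mult. apply sqrt_le_1_alt. lra. lra. apply P_ge0. }
   lra. }
 exists (Ttop + A2 y2 + RInt fi y2 y0). intros y Hy. destruct (Rle_or_lt y y2).
 apply key; lra. apply Rle_trans with (T y2). apply Rlt_le, T_decr; lra. apply key; lra. Qed.

Lemma T_unbounded : 0 <= p -> forall M, exists y, 0 < y < phi0 /\ M < T y.
Proof. intros Hp M. destruct y0_prop as [Hy0 _].
 assert (hC := Cpos_pos). assert (hk : 0 < sqrt (2 * Cpos)) by (apply sqrt_lt_R0; lra).
 set (K := (Rabs (M - Ttop) + 1) * sqrt (2 * Cpos)).
 assert (hK : 0 < K) by (unfold K; apply Rmult_lt_0_compat; auto; assert (0 <= Rabs (M - Ttop)) by apply Rabs_pos; lra).
 set (y := y0 * exp (- K)).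
 assert (hy : 0 < y) by (unfold y; apply Rmult_lt_0_compat; [lra|apply exp_pos]).
 assert (hy' : y < y0). { unfold y. assert (exp (- K) < 1). rewrite <- exp_0. apply exp_increasing; lra.
   nra. }
 assert (Ey : y = y0 * exp (- K)) by reflexivity. clearbody y.
 assert (EK : K = (Rabs (M - Ttop) + 1) * sqrt (2 * Cpos)) by reflexivity. clearbody K. exists y. split. lra.
 rewrite (T_eq_low y y0) by lra. replace (RInt fi y0 y0) with 0 by (rewrite RInt_point; reflexivity).
 set (A3 := fun s => / sqrt (2 * Cpos) * ln s). set (g3 := fun s => / (sqrt (2 * Cpos) * s)).
 assert (Hg : forall s, y <= s <= y0 -> is_derive A3 s (g3 s) /\ continuous g3 s).
 { intros s Hs. split.
   - unfold A3, g3. apply isd_ext_val with (/ s / sqrt (2 * Cpos)). field; lra.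
     apply isd_ext_val with (/ sqrt (2 * Cpos) * / s). unfold Rdiv; ring. apply isd_scal.
     apply is_derive_Reals, derivable_pt_lim_ln; lra.
   - unfold g3. apply cont_inv. apply cont_scal, cont_id. apply Rgt_not_eq, Rmult_lt_0_compat; lra. }
 assert (EA : RInt g3 y y0 = A3 y0 - A3 y).
 { apply (RInt_deriv A3 g3). intros x Hx. rewrite Rmin_left, Rmax_right in Hx by lra. apply Hg; lra.
   intros x Hx. rewrite Rmin_left, Rmax_right in Hx by lra. apply Hg; lra. }
 assert (EA' : A3 y0 - A3 y = K / sqrt (2 * Cpos)).
 { unfold A3. rewrite Ey. rewrite ln_mult by (lra || apply exp_pos). rewrite ln_exp. field. lra. }
 assert (RInt g3 y y0 <= RInt fi y y0).
 { apply RInt_le. lra.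
   apply exR_cont. intros z Hz. rewrite Rmin_left, Rmax_right in Hz by lra. apply Hg; lra.
   apply fi_ex; lra.
   intros x Hx. unfold fi, g3. apply Rinv_le_contravar. apply S_pos; lra.
   assert (Ex : sqrt (2 * Cpos) * x = sqrt (2 * Cpos * x ^ 2)) by (rewrite (sqrt_mult (2 * Cpos) (x ^ 2)), sqrt_pow2; try lra; apply pow2_ge_0).
   unfold Sfun. rewrite Ex.
   apply sqrt_le_1_alt. assert (F x <= Cpos * x ^ 2) by (apply bound_pos; lra). lra. }
 assert (K / sqrt (2 * Cpos) = Rabs (M - Ttop) + 1) by (rewrite EK; field; apply Rgt_not_eq; lra).
 assert (M - Ttop <= Rabs (M - Ttop)) by apply Rle_abs. lra. Qed.

Definition Tset z := exists y, 0 < y < phi0 /\ z = T y.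
Lemma Tset_bound : p < 0 -> bound Tset.
Proof. intros Hp. destruct (T_bounded Hp) as [M HM]. exists M. intros z [y [Hy ->]]. auto. Qed.
Lemma Tset_ne : exists z, Tset z.
Proof. assert (h0 := phi0_pos). exists (T (phi0/2)). exists (phi0/2). split; auto; lra. Qed.

Definition Lsup : R := match Rlt_dec p 0 with
  | left H => proj1_sig (completeness Tset (Tset_bound H) Tset_ne)
  | right _ => -1 end.

Lemma Lsup_lub : p < 0 -> is_lub Tset Lsup.
Proof. intros H. unfold Lsup. destruct (Rlt_dec p 0) as [H'|H']; [|lra]. destruct completeness; auto. Qed.

Definition inrange x := 0 < x /\ (p < 0 -> x < Lsup).

Lemma T_inrange y : 0 < y < phi0 -> inrange (T y).
Proof. intros Hy. split. apply T_pos; auto. intros Hp. destruct (Lsup_lub Hp) as [H1 _].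
 assert (T y < T (y/2)) by (apply T_decr; lra). assert (T (y/2) <= Lsup) by (apply H1; exists (y/2); split; auto; lra). lra. Qed.

Lemma T_onto x : inrange x -> exists y, 0 < y < phi0 /\ T y = x.
Proof. intros [Hx Hr].
 assert (Ha : exists ya, 0 < ya < phi0 /\ x < T ya).
 { destruct (Rlt_or_le p 0) as [Hp|Hp].
   - specialize (Hr Hp). destruct (Lsup_lub Hp) as [H1 H2].
     destruct (Classical_Prop.classic (exists ya, 0 < ya < phi0 /\ x < T ya)) as [E|N]; auto.
     assert (is_upper_bound Tset x). { intros z [y [Hy ->]]. destruct (Rle_or_lt (T y) x); auto. exfalso; apply N; exists y; auto. }
     specialize (H2 _ H). lra.
   - apply T_unbounded; auto. }
 destruct Ha as [ya [Hya Ta]]. destruct (T_small x Hx) as [yb [Hyb Tb]].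
 assert (ya < yb). { destruct (Rlt_or_le ya yb); auto. destruct (Req_dec ya yb). subst; lra.
   assert (T ya < T yb) by (apply T_decr; lra). lra. }
 destruct (Ranalysis5.IVT_interv (fun y => x - T y) ya yb) as [y [Hy Ey]].
 intros c Hc. apply continuity_pt_filterlim. apply cont_minus. apply cont_const. apply T_cont; lra.
 auto. lra. lra.
 exists y. split. lra. lra. Qed.

Definition ghat (x : R) : R :=
  match Rle_dec x 0 with
  | left _ => phi0
  | right _ => match excluded_middle_informative (inrange x) with
     | left H => proj1_sig (constructive_indefinite_description _ (T_onto x H))
     | right _ => 0 end end.

Lemma ghat_neg x : x <= 0 -> ghat x = phi0.
Proof. intros H. unfold ghat. destruct (Rle_dec x 0); auto; lra. Qed.

Lemma ghat_in x : inrange x -> 0 < ghat x < phi0 /\ T (ghat x) = x.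
Proof. intros H. unfold ghat. destruct (Rle_dec x 0). destruct H; lra.
 destruct (excluded_middle_informative (inrange x)); [|tauto].
 destruct constructive_indefinite_description as [y Hy]; simpl; auto. Qed.

Lemma ghat_out x : 0 < x -> ~ inrange x -> ghat x = 0.
Proof. intros H1 H2. unfold ghat. destruct (Rle_dec x 0). lra.
 destruct (excluded_middle_informative (inrange x)); tauto. Qed.

Lemma T_inj u v : 0 < u < phi0 -> 0 < v < phi0 -> T u = T v -> u = v.
Proof. intros Hu Hv E. destruct (Rtotal_order u v) as [H|[H|H]]; auto.
 assert (T v < T u) by (apply T_decr; lra). lra. assert (T u < T v) by (apply T_decr; lra). lra. Qed.

Lemma ghat_T y : 0 < y < phi0 -> ghat (T y) = y.
Proof. intros Hy. destruct (ghat_in (T y) (T_inrange y Hy)) as [H1 H2]. apply T_inj; auto. Qed.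

Lemma ghat_range x : 0 <= ghat x <= phi0.
Proof. assert (h0 := phi0_pos). destruct (Rle_or_lt x 0). rewrite ghat_neg; lra.
 destruct (Classical_Prop.classic (inrange x)). destruct (ghat_in x H0); lra. rewrite ghat_out; auto; lra. Qed.

Lemma inrange_down x x' : 0 < x <= x' -> inrange x' -> inrange x.
Proof. intros H [H1 H2]. split. lra. intros Hp; specialize (H2 Hp); lra. Qed.

Lemma ghat_mono x x' : x <= x' -> ghat x' <= ghat x.
Proof. intros H. assert (h0 := phi0_pos). destruct (Rle_or_lt x' 0).
 rewrite !ghat_neg; lra. destruct (Rle_or_lt x 0). rewrite (ghat_neg x) by auto. apply ghat_range.
 destruct (Classical_Prop.classic (inrange x')) as [Hi|Hi].
 - assert (Hi2 := inrange_down x x' ltac:(lra) Hi).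
   destruct (ghat_in x Hi2) as [A1 A2]. destruct (ghat_in x' Hi) as [B1 B2].
   destruct (Rle_or_lt (ghat x') (ghat x)); auto. assert (T (ghat x') < T (ghat x)) by (apply T_decr; lra). lra.
 - rewrite (ghat_out x'); auto. apply ghat_range. Qed.

Lemma ghat_darboux a0 b0 c : a0 < b0 -> ghat b0 <= c <= ghat a0 -> exists z, a0 <= z <= b0 /\ ghat z = c.
Proof. intros Hab Hc. destruct (Req_dec c (ghat a0)). exists a0; split; auto; lra.
 destruct (Req_dec c (ghat b0)). exists b0; split; auto; lra.
 assert (Hr1 := ghat_range a0). assert (Hr2 := ghat_range b0).
 assert (0 < c < phi0) by lra. exists (T c). rewrite ghat_T by auto. split; auto.
 split.
 - destruct (Rle_or_lt a0 (T c)); auto. assert (ghat a0 <= ghat (T c)) by (apply ghat_mono; lra). rewrite ghat_T in H3 by auto. lra.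
 - destruct (Rle_or_lt (T c) b0); auto. assert (ghat (T c) <= ghat b0) by (apply ghat_mono; lra). rewrite ghat_T in H3 by auto. lra. Qed.

Lemma ghat_cont x : continuous ghat x.
Proof. apply mono_darboux_cont. apply ghat_mono. apply ghat_darboux. Qed.

Definition phi x := ghat (Rabs x).
Definition sg (x : R) : R := if Rlt_dec x 0 then -1 else 1.
Definition phi1 x := - sg x * Sfun (phi x).

Lemma phi_cont x : continuous phi x.
Proof. unfold phi. apply (cont_comp ghat Rabs). apply continuity_pt_filterlim, Rcontinuity_abs. apply ghat_cont. Qed.

Lemma phi_even x : phi (- x) = phi x.
Proof. unfold phi. rewrite Rabs_Ropp. auto. Qed.

Lemma phi_range x : 0 <= phi x <= phi0.
Proof. apply ghat_range. Qed.

Lemma phi_0 : phi 0 = phi0.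
Proof. unfold phi. rewrite Rabs_R0. apply ghat_neg; lra. Qed.

Lemma Lsup_pos : p < 0 -> 0 < Lsup.
Proof. intros Hp. assert (h0 := phi0_pos). destruct (T_inrange (phi0/2)) as [H1 H2]. lra. specialize (H2 Hp). lra. Qed.

Lemma Lsup_nz : Lsup <> 0.
Proof. destruct (Rlt_dec p 0) as [H|H]. apply Rgt_not_eq, Lsup_pos; auto.
 unfold Lsup. destruct (Rlt_dec p 0); [tauto|lra]. Qed.

Lemma inrange_open x : inrange x -> exists r, 0 < r /\ forall y, Rabs (y - x) < r -> inrange y.
Proof. intros [H1 H2]. destruct (Rlt_dec p 0) as [Hp|Hp].
 - specialize (H2 Hp). exists (Rmin x (Lsup - x)). split. apply Rmin_glb_lt; lra.
   intros y Hy. assert (Rmin x (Lsup - x) <= x) by apply Rmin_l. assert (Rmin x (Lsup - x) <= Lsup - x) by apply Rmin_r.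
   apply Rabs_lt_between in Hy. split. lra. intros; lra.
 - exists x. split; auto. intros y Hy. apply Rabs_lt_between in Hy. split. lra. intros; lra. Qed.

Lemma ghat_deriv x : inrange x -> is_derive ghat x (- Sfun (ghat x)).
Proof. intros Hx. destruct (ghat_in x Hx) as [Hg Hgt].
 assert (hS : 0 < Sfun (ghat x)) by (apply S_pos; auto).
 replace (- Sfun (ghat x)) with (/ (- fi (ghat x))) by (unfold fi; field; lra).
 apply inv_deriv with T. apply ghat_cont.
 destruct (inrange_open x Hx) as [r [Hr H]]. exists r. split; auto. intros x' Hx'. apply ghat_in; auto.
 apply T_deriv; auto. assert (0 < fi (ghat x)) by (apply fi_pos; auto). lra. Qed.

Lemma sg_pos x : 0 < x -> sg x = 1.
Proof. intros; unfold sg; destruct (Rlt_dec x 0); lra. Qed.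
Lemma sg_neg x : x < 0 -> sg x = -1.
Proof. intros; unfold sg; destruct (Rlt_dec x 0); lra. Qed.

Lemma phi_deriv_int x : x <> 0 -> inrange (Rabs x) -> is_derive phi x (phi1 x).
Proof. intros Hx Hr. unfold phi1. destruct (Rlt_or_le 0 x) as [Hp|Hn].
 - rewrite sg_pos by auto. rewrite Rabs_pos_eq in Hr by lra.
   apply is_derive_ext_loc with (f := ghat). apply (loc_of x x); auto. intros y Hy. apply Rabs_lt_between in Hy.
   unfold phi. rewrite Rabs_pos_eq by lra. auto.
   unfold phi. rewrite Rabs_pos_eq by lra. apply isd_ext_val with (- Sfun (ghat x)). ring. apply ghat_deriv; auto.
 - rewrite sg_neg by lra. rewrite Rabs_left in Hr by lra.
   apply is_derive_ext_loc with (f := fun y => ghat (- y)). apply (loc_of x (- x)). lra. intros y Hy. apply Rabs_lt_between in Hy.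
   unfold phi. rewrite Rabs_left by lra. auto.
   unfold phi. rewrite Rabs_left by lra. apply isd_ext_val with ((-1) * (- Sfun (ghat (- x)))). ring.
   apply (isd_comp ghat (fun y => - y)). apply ghat_deriv; auto. auto_derive; auto. Qed.

Lemma point_cases x : x <> 0 -> Rabs x <> Lsup -> inrange (Rabs x) \/ (p < 0 /\ Lsup < Rabs x).
Proof. intros H1 H2. destruct (Classical_Prop.classic (inrange (Rabs x))) as [H|H]; auto. right.
 assert (0 < Rabs x) by (apply Rabs_pos_lt; auto).
 destruct (Rlt_dec p 0) as [Hp|Hp]. split; auto. destruct (Rlt_or_le Lsup (Rabs x)); auto.
 exfalso. apply H. split; auto. intros; lra.
 exfalso. apply H. split; auto. intros; lra. Qed.

Lemma phi_zero_ext x : p < 0 -> Lsup < Rabs x -> exists r, 0 < r /\ forall y, Rabs (y - x) < r -> phi y = 0.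
Proof. intros Hp Hx. exists (Rabs x - Lsup). split. lra. intros y Hy. unfold phi. apply ghat_out.
 assert (Rabs y > Lsup). { assert (Rabs x <= Rabs y + Rabs (y - x)). replace x with (y - (y - x)) at 1 by ring.
   eapply Rle_trans. apply Rabs_triang. rewrite Rabs_Ropp. lra. lra. }
 assert (hL := Lsup_pos Hp). lra.
 intros [_ H]. specialize (H Hp). assert (Rabs x <= Rabs y + Rabs (y - x)). replace x with (y - (y - x)) at 1 by ring.
   eapply Rle_trans. apply Rabs_triang. rewrite Rabs_Ropp. lra. lra. Qed.

Lemma phi_pos_inrange x : x <> 0 -> 0 < phi x -> inrange (Rabs x).
Proof. intros H1 H2. destruct (Classical_Prop.classic (inrange (Rabs x))) as [H|H]; auto.
 unfold phi in H2. rewrite ghat_out in H2; auto. lra. apply Rabs_pos_lt; auto. Qed.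

Lemma phi_inrange x : x <> 0 -> inrange (Rabs x) -> 0 < phi x < phi0.
Proof. intros H1 H2. apply ghat_in; auto. Qed.

Lemma sg_loc x : x <> 0 -> exists r, 0 < r /\ forall y, Rabs (y - x) < r -> sg y = sg x.
Proof. intros Hx. exists (Rabs x). split. apply Rabs_pos_lt; auto. intros y Hy.
 destruct (Rlt_or_le 0 x). rewrite (Rabs_pos_eq x) in Hy by lra. apply Rabs_lt_between in Hy. rewrite !sg_pos; lra.
 rewrite (Rabs_left x) in Hy by lra. apply Rabs_lt_between in Hy. rewrite !sg_neg; lra. Qed.

Lemma sg_sq x : sg x * sg x = 1.
Proof. unfold sg. destruct (Rlt_dec x 0); ring. Qed.

Lemma sg_abs x : Rabs (sg x) = 1.
Proof. unfold sg. destruct (Rlt_dec x 0); [rewrite Rabs_left|rewrite Rabs_pos_eq]; lra. Qed.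

Lemma sg_mul_deriv (K : R -> R) x dK : x <> 0 -> is_derive K x dK -> is_derive (fun y => sg y * K y) x (sg x * dK).
Proof. intros Hx HK. destruct (sg_loc x Hx) as [r [Hr H]].
 apply is_derive_ext_loc with (f := fun y => sg x * K y). apply (loc_of x r); auto. intros y Hy. rewrite (H y Hy); auto.
 apply isd_scal; auto. Qed.

Lemma sg_mul_cont (H : R -> R) : (forall s, continuous H s) -> H phi0 = 0 -> forall x, continuous (fun x => sg x * H (phi x)) x.
Proof. intros Hc H0 x. destruct (Req_dec x 0) as [E|E].
 - subst. apply cont_of_eps. intros eps He.
   destruct (cont_eps (fun y => H (phi y)) 0 (cont_comp H phi 0 (phi_cont 0) (Hc _)) eps He) as [d [Hd Hy]].
   exists d. split; auto. intros y Hyd. specialize (Hy y Hyd). rewrite phi_0, H0 in *.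
   rewrite Rmult_0_r, Rminus_0_r in *. rewrite Rabs_mult, sg_abs. lra.
 - destruct (sg_loc x E) as [r [Hr Hs]].
   apply continuous_ext_loc with (g := fun y => sg x * H (phi y)). apply (loc_of x r); auto. intros y Hy. rewrite (Hs y Hy); auto.
   apply cont_scal. apply cont_comp. apply phi_cont. apply Hc. Qed.

Lemma phi1_cont x : continuous phi1 x.
Proof. apply cont_ext with (f := fun x => sg x * (fun s => - Sfun s) (phi x)). intros; unfold phi1; ring.
 apply (sg_mul_cont (fun s => - Sfun s)). intros s. apply cont_ext with (f := fun s => -1 * Sfun s). intros; ring. apply cont_scal, S_cont.
 rewrite S_phi0; ring. Qed.

Lemma phi_deriv x : is_derive phi x (phi1 x).
Proof. apply (glue phi phi1 Lsup Lsup_nz phi_cont phi1_cont). intros y H1 H2.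
 destruct (point_cases y H1 H2) as [H|[Hp H]]. apply phi_deriv_int; auto.
 apply deriv_loc0. apply phi_zero_ext; auto.
 destruct (phi_zero_ext y Hp H) as [r [Hr Hz]]. unfold phi1. rewrite Hz. rewrite S_0; ring. rewrite Rminus_diag, Rabs_R0; auto. Qed.

Lemma Gphi_cont x : continuous (fun x => G (phi x)) x.
Proof. apply cont_comp. apply phi_cont. apply G_cont. Qed.

Lemma phi1_deriv x : is_derive phi1 x (G (phi x)).
Proof. apply (glue phi1 (fun x => G (phi x)) Lsup Lsup_nz phi1_cont Gphi_cont). intros y H1 H2.
 destruct (point_cases y H1 H2) as [H|[Hp H]].
 - destruct (phi_inrange y H1 H) as [Ha Hb]. assert (hS : 0 < Sfun (phi y)) by (apply S_pos; auto).
   apply isd_ext with (f := fun y => sg y * (- Sfun (phi y))). intros; unfold phi1; ring.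
   apply isd_ext_val with (sg y * (- (phi1 y * (G (phi y) / Sfun (phi y))))).
   unfold phi1. replace (sg y * - (- sg y * Sfun (phi y) * (G (phi y) / Sfun (phi y)))) with ((sg y * sg y) * G (phi y)) by (field; lra).
   rewrite sg_sq; ring.
   apply sg_mul_deriv; auto. apply isd_ext_val with (-1 * (phi1 y * (G (phi y) / Sfun (phi y)))). ring.
   apply isd_ext with (f := fun y => -1 * Sfun (phi y)). intros; ring.
   apply isd_scal with (f := fun y => Sfun (phi y)). apply (isd_comp Sfun phi). apply S_deriv; auto. apply phi_deriv.
 - destruct (phi_zero_ext y Hp H) as [r [Hr Hz]]. apply deriv_loc0. exists r; split; auto. intros z Hz'.
   unfold phi1. rewrite Hz; auto. rewrite S_0; ring.
   rewrite Hz. apply G_0. rewrite Rminus_diag, Rabs_R0; auto. Qed.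

Lemma P_deriv' s e e' : 0 < s -> e' = e - 1 -> is_derive (fun s => P s e) s (e * P s e').
Proof. intros Hs ->. apply P_deriv; auto. Qed.

Definition F13 s := w / 2 * P s (4/3) + a / (p + 2) * P s (p + 4/3) - 3 * b / 8 * P s 2.
Definition K1 s := 2/3 * b * sqrt (2 * F13 s).
Definition psi x := - b * P (phi x) (2/3).
Definition psi1 x := sg x * K1 (phi x).

Lemma F13_eq s : F13 s = P s (- (2/3)) * F s.
Proof. unfold F13, F. rewrite <- P_2.
 replace (P s (- (2 / 3)) * (w * P s 2 / 2 + a / (p + 2) * P s (p + 2) - 3 * b / 8 * P s (8 / 3)))
   with (w / 2 * (P s (- (2/3)) * P s 2) + a / (p + 2) * (P s (- (2/3)) * P s (p + 2)) - 3 * b / 8 * (P s (- (2/3)) * P s (8 / 3))) by (field; lra).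
 rewrite !P_mul. replace (- (2/3) + 2) with (4/3) by field. replace (- (2/3) + (p + 2)) with (p + 4/3) by field.
 replace (- (2/3) + 8/3) with 2 by field. reflexivity. Qed.

Lemma sqrt_P s e : P s e = sqrt (P s (2 * e)).
Proof. replace (2 * e) with (e + e) by ring. rewrite <- P_mul. rewrite sqrt_square; auto. apply P_ge0. Qed.

Lemma F13_S s : P s (- (1/3)) * Sfun s = sqrt (2 * F13 s).
Proof. unfold Sfun. rewrite F13_eq. rewrite (sqrt_P s). rewrite <- sqrt_mult_alt by apply P_ge0.
 f_equal. replace (2 * - (1/3)) with (- (2/3)) by field. ring. Qed.

Lemma F13_cont s : continuous F13 s.
Proof. unfold F13. apply cont_minus. apply cont_plus.
 apply cont_scal, P_cont; lra. apply cont_scal, P_cont; lra. apply cont_scal, P_cont; lra. Qed.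

Lemma K1_cont s : continuous K1 s.
Proof. unfold K1. apply cont_scal, cont_sqrt, cont_scal, F13_cont. Qed.

Lemma K1_phi0 : K1 phi0 = 0.
Proof. unfold K1. rewrite F13_eq, F_phi0. rewrite Rmult_0_r, Rmult_0_r, sqrt_0. ring. Qed.
Lemma K1_0 : K1 0 = 0.
Proof. unfold K1. rewrite F13_eq, F_0. rewrite Rmult_0_r, Rmult_0_r, sqrt_0. ring. Qed.

Lemma psi_cont x : continuous psi x.
Proof. unfold psi. apply cont_scal. apply (cont_comp (fun s => P s (2/3)) phi). apply phi_cont. apply P_cont; lra. Qed.

Lemma psi1_cont x : continuous psi1 x.
Proof. apply (sg_mul_cont K1). apply K1_cont. apply K1_phi0. Qed.

Lemma psi_deriv x : is_derive psi x (psi1 x).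
Proof. apply (glue psi psi1 Lsup Lsup_nz psi_cont psi1_cont). intros y H1 H2.
 destruct (point_cases y H1 H2) as [H|[Hp H]].
 - destruct (phi_inrange y H1 H) as [Ha Hb].
   unfold psi, psi1, K1. rewrite <- F13_S.
   apply isd_ext_val with (- b * (phi1 y * (2/3 * P (phi y) (- (1/3))))).
   unfold phi1. field.
   apply isd_scal. apply (isd_comp (fun s => P s (2/3)) phi). apply P_deriv'; auto. field. apply phi_deriv.
 - destruct (phi_zero_ext y Hp H) as [r [Hr Hz]]. apply deriv_loc0. exists r; split; auto. intros z Hz'.
   unfold psi. rewrite Hz; auto. rewrite P_0; ring.
   unfold psi1. rewrite Hz. rewrite K1_0; ring. rewrite Rminus_diag, Rabs_R0; auto. Qed.

Definition H2 s := 2/3 * b * (2/3 * w * P s (2/3) + a * (p + 4/3) / (p + 2) * P s (p + 2/3) - 3 * b / 4 * P s (4/3)).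
Definition psi2 x := - H2 (phi x).
Definition F13d s := w / 2 * (4/3 * P s (1/3)) + a / (p + 2) * ((p + 4/3) * P s (p + 1/3)) - 3 * b / 8 * (2 * P s 1).

Lemma F13_deriv s : 0 < s -> is_derive F13 s (F13d s).
Proof. intros Hs. unfold F13, F13d. apply isd_minus. apply isd_plus.
 apply isd_scal. apply P_deriv'; auto. field. apply isd_scal. apply P_deriv'; auto. field.
 apply isd_scal. apply P_deriv'; auto. ring. Qed.

Lemma H2_cont (hq : - (2/3) < p) s : continuous H2 s.
Proof. unfold H2. apply cont_scal. apply cont_minus. apply cont_plus.
 apply cont_scal, P_cont; lra. apply cont_scal, P_cont; lra. apply cont_scal, P_cont; lra. Qed.

Lemma H2_0 : H2 0 = 0.
Proof. unfold H2. rewrite !P_0. ring. Qed.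

Lemma psi2_cont (hq : - (2/3) < p) x : continuous psi2 x.
Proof. unfold psi2. apply cont_ext with (f := fun x => -1 * H2 (phi x)). intros; ring.
 apply cont_scal. apply cont_comp. apply phi_cont. apply H2_cont; auto. Qed.

Lemma psi1_deriv (hq : - (2/3) < p) x : is_derive psi1 x (psi2 x).
Proof. apply (glue psi1 psi2 Lsup Lsup_nz psi1_cont (psi2_cont hq)). intros y H1 H2'.
 destruct (point_cases y H1 H2') as [H|[Hp H]].
 - destruct (phi_inrange y H1 H) as [Ha Hb]. set (s := phi y) in *.
   assert (hS : 0 < Sfun s) by (apply S_pos; auto).
   assert (hX : 0 < P s (1/3)) by (apply P_gt0; lra).
   assert (E1 : P s (- (1/3)) = / P s (1/3)) by (apply P_inv; lra).
   assert (E2 : P s (2/3) = P s (1/3) * P s (1/3)) by (rewrite P_mul; f_equal; field).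
   assert (E3 : P s (p + 2/3) = P s (p + 1/3) * P s (1/3)) by (rewrite P_mul; f_equal; field).
   assert (E4 : P s (4/3) = P s 1 * P s (1/3)) by (rewrite P_mul; f_equal; field).
   assert (hF : 0 < sqrt (2 * F13 s)). { rewrite <- F13_S. rewrite E1. apply Rmult_lt_0_compat; auto. apply Rinv_0_lt_compat; auto. }
   unfold psi1. apply isd_ext_val with (sg y * (phi1 y * (2/3 * b * (2 * F13d s / (2 * sqrt (2 * F13 s)))))).
   + unfold psi2, H2, phi1, F13d. fold s. rewrite <- F13_S. rewrite E1, E2, E3, E4.
     replace (sg y * (- sg y * Sfun s * (2 / 3 * b * (2 * (w / 2 * (4 / 3 * P s (1 / 3)) + a / (p + 2) * ((p + 4 / 3) * P s (p + 1 / 3)) - 3 * b / 8 * (2 * P s 1)) / (2 * (/ P s (1 / 3) * Sfun s))))))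
     with ((sg y * sg y) * (- Sfun s * (2 / 3 * b * (2 * (w / 2 * (4 / 3 * P s (1 / 3)) + a / (p + 2) * ((p + 4 / 3) * P s (p + 1 / 3)) - 3 * b / 8 * (2 * P s 1)) / (2 * (/ P s (1 / 3) * Sfun s)))))) by ring.
     rewrite sg_sq. field. repeat split; lra.
   + apply sg_mul_deriv; auto. apply (isd_comp K1 phi). unfold K1. apply isd_scal.
     apply (isd_sqrt (fun s => 2 * F13 s)). apply isd_scal. apply F13_deriv; lra.
     rewrite F13_eq. assert (0 < F s) by (apply F_pos_below; lra). assert (0 < P s (-(2/3))) by (apply P_gt0; lra).
     apply Rmult_lt_0_compat. lra. apply Rmult_lt_0_compat; auto.
     apply phi_deriv.
 - destruct (phi_zero_ext y Hp H) as [r [Hr Hz]]. apply deriv_loc0. exists r; split; auto. intros z Hz'.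
   unfold psi1. rewrite Hz; auto. rewrite K1_0; ring.
   unfold psi2. rewrite Hz. rewrite H2_0; ring. rewrite Rminus_diag, Rabs_R0; auto. Qed.

Definition Gd s := w + a * ((p + 1) * P s p) - b * (5/3 * P s (2/3)).
Lemma G_deriv s : 0 < s -> is_derive G s (Gd s).
Proof. intros Hs. unfold G, Gd. apply isd_minus. apply isd_plus.
 apply isd_ext_val with (w * 1). ring. apply isd_scal, isd_id.
 apply isd_scal. apply P_deriv'; auto. ring. apply isd_scal. apply P_deriv'; auto. field. Qed.

Definition Fq s := w / 2 * P s (2 * p + 2) + a / (p + 2) * P s (3 * p + 2) - 3 * b / 8 * P s (2 * p + 8/3).
Lemma Fq_eq s : Fq s = P s (2 * p) * F s.
Proof. unfold Fq, F. rewrite <- P_2.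
 replace (P s (2 * p) * (w * P s 2 / 2 + a / (p + 2) * P s (p + 2) - 3 * b / 8 * P s (8 / 3)))
   with (w / 2 * (P s (2 * p) * P s 2) + a / (p + 2) * (P s (2 * p) * P s (p + 2)) - 3 * b / 8 * (P s (2 * p) * P s (8 / 3))) by (field; lra).
 rewrite !P_mul. replace (2 * p + 2) with (2 * p + 2) by ring. replace (2 * p + (p + 2)) with (3 * p + 2) by ring.
 reflexivity. Qed.

Lemma Fq_S s : P s p * Sfun s = sqrt (2 * Fq s).
Proof. unfold Sfun. rewrite Fq_eq. rewrite (sqrt_P s p). rewrite <- sqrt_mult_alt by apply P_ge0.
 f_equal. ring. Qed.

Definition H3 s := (w - 5/3 * b * P s (2/3)) * Sfun s + a * (p + 1) * sqrt (2 * Fq s).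
Definition phi3 x := sg x * (- H3 (phi x)).

Lemma H3_cont (hq : - (2/3) < p) s : continuous H3 s.
Proof. unfold H3. apply cont_plus. apply cont_mult. apply cont_minus. apply cont_const. apply cont_scal, P_cont; lra.
 apply S_cont. apply cont_scal. apply cont_sqrt. apply cont_scal. unfold Fq. apply cont_minus. apply cont_plus.
 apply cont_scal, P_cont; lra. apply cont_scal, P_cont; lra. apply cont_scal, P_cont; lra. Qed.

Lemma H3_phi0 : H3 phi0 = 0.
Proof. unfold H3. rewrite S_phi0, Fq_eq, F_phi0. rewrite !Rmult_0_r, sqrt_0. ring. Qed.
Lemma H3_0 : H3 0 = 0.
Proof. unfold H3. rewrite S_0, Fq_eq, F_0. rewrite !Rmult_0_r, sqrt_0. ring. Qed.

Lemma phi3_cont (hq : - (2/3) < p) x : continuous phi3 x.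
Proof. apply (sg_mul_cont (fun s => - H3 s)). intros s. apply cont_ext with (f := fun s => -1 * H3 s). intros; ring.
 apply cont_scal, H3_cont; auto. rewrite H3_phi0; ring. Qed.

Lemma Gphi_deriv (hq : - (2/3) < p) x : is_derive (fun x => G (phi x)) x (phi3 x).
Proof. apply (glue (fun x => G (phi x)) phi3 Lsup Lsup_nz Gphi_cont (phi3_cont hq)). intros y H1 H2'.
 destruct (point_cases y H1 H2') as [H|[Hp H]].
 - destruct (phi_inrange y H1 H) as [Ha Hb].
   apply isd_ext_val with (phi1 y * Gd (phi y)).
   unfold phi3, H3, phi1, Gd. rewrite <- Fq_S. ring.
   apply (isd_comp G phi). apply G_deriv; auto. apply phi_deriv.
 - destruct (phi_zero_ext y Hp H) as [r [Hr Hz]]. apply deriv_loc0. exists r; split; auto. intros z Hz'.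
   rewrite Hz; auto. apply G_0.
   unfold phi3. rewrite Hz. rewrite H3_0; ring. rewrite Rminus_diag, Rabs_R0; auto. Qed.

Lemma bounded_comp (H : R -> R) : (forall s, continuous H s) -> exists M, forall x, Rabs (H (phi x)) <= M.
Proof. intros Hc. assert (h0 := phi0_pos).
 destruct (continuity_ab_maj (fun s => Rabs (H s)) 0 phi0) as [Mx [HM _]]. lra.
 intros c _. apply continuity_pt_filterlim. apply (cont_comp Rabs H). apply Hc.
 apply continuity_pt_filterlim, Rcontinuity_abs.
 exists (Rabs (H Mx)). intros x. apply HM. apply phi_range. Qed.

Lemma bounded_sg (H : R -> R) : (forall s, continuous H s) -> exists M, forall x, Rabs (sg x * H (phi x)) <= M.
Proof. intros Hc. destruct (bounded_comp H Hc) as [M HM]. exists M. intros x. rewrite Rabs_mult, sg_abs. rewrite Rmult_1_l. auto. Qed.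

Lemma Dn_phi_1 : Derive_n phi 1 = phi1.
Proof. apply functional_extensionality. intros x. simpl. apply is_derive_unique, phi_deriv. Qed.
Lemma Dn_phi_2 : Derive_n phi 2 = (fun x => G (phi x)).
Proof. apply functional_extensionality. intros x. change (Derive (Derive_n phi 1) x = G (phi x)).
 rewrite Dn_phi_1. apply is_derive_unique, phi1_deriv. Qed.
Lemma Dn_phi_3 (hq : - (2/3) < p) : Derive_n phi 3 = phi3.
Proof. apply functional_extensionality. intros x. change (Derive (Derive_n phi 2) x = phi3 x).
 rewrite Dn_phi_2. apply is_derive_unique, Gphi_deriv; auto. Qed.
Lemma Dn_psi_1 : Derive_n psi 1 = psi1.
Proof. apply functional_extensionality. intros x. simpl. apply is_derive_unique, psi_deriv. Qed.
Lemma Dn_psi_2 (hq : - (2/3) < p) : Derive_n psi 2 = psi2.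
Proof. apply functional_extensionality. intros x. change (Derive (Derive_n psi 1) x = psi2 x).
 rewrite Dn_psi_1. apply is_derive_unique, psi1_deriv; auto. Qed.

Lemma Dn0 (f : R -> R) : Derive_n f 0 = f.
Proof. reflexivity. Qed.

Lemma phi_C2 : CkWkinf 2 phi.
Proof. split. split.
 - intros j x Hj. destruct j as [|[|j]]; [| |lia]. rewrite Dn0. eexists; apply phi_deriv.
   rewrite Dn_phi_1. eexists; apply phi1_deriv.
 - intros j x Hj. destruct j as [|[|[|j]]]; [| | |lia]. rewrite Dn0; apply phi_cont.
   rewrite Dn_phi_1; apply phi1_cont. rewrite Dn_phi_2; apply Gphi_cont.
 - intros j Hj. destruct j as [|[|[|j]]]; [| | |lia].
   + rewrite Dn0. exists phi0. intros x. destruct (phi_range x). rewrite Rabs_pos_eq; lra.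
   + rewrite Dn_phi_1. destruct (bounded_sg (fun s => - Sfun s)) as [M HM].
     intros s. apply cont_ext with (f := fun s => -1 * Sfun s). intros; ring. apply cont_scal, S_cont.
     exists M. intros x. unfold phi1. replace (- sg x * Sfun (phi x)) with (sg x * - Sfun (phi x)) by ring. auto.
   + rewrite Dn_phi_2. apply bounded_comp. apply G_cont. Qed.

Lemma phi_C3 (hq : - (2/3) < p) : CkWkinf 3 phi.
Proof. split. split.
 - intros j x Hj. destruct j as [|[|[|j]]]; [| | |lia]. rewrite Dn0. eexists; apply phi_deriv.
   rewrite Dn_phi_1. eexists; apply phi1_deriv. rewrite Dn_phi_2. eexists; apply Gphi_deriv; auto.
 - intros j x Hj. destruct j as [|[|[|[|j]]]]; [| | | |lia]. rewrite Dn0; apply phi_cont.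
   rewrite Dn_phi_1; apply phi1_cont. rewrite Dn_phi_2; apply Gphi_cont. rewrite Dn_phi_3; auto. apply phi3_cont; auto.
 - intros j Hj. destruct j as [|[|[|[|j]]]]; [| | | |lia].
   + rewrite Dn0. exists phi0. intros x. destruct (phi_range x). rewrite Rabs_pos_eq; lra.
   + rewrite Dn_phi_1. destruct (bounded_sg (fun s => - Sfun s)) as [M HM].
     intros s. apply cont_ext with (f := fun s => -1 * Sfun s). intros; ring. apply cont_scal, S_cont.
     exists M. intros x. unfold phi1. replace (- sg x * Sfun (phi x)) with (sg x * - Sfun (phi x)) by ring. auto.
   + rewrite Dn_phi_2. apply bounded_comp. apply G_cont.
   + rewrite Dn_phi_3 by auto. apply (bounded_sg (fun s => - H3 s)).
     intros s. apply cont_ext with (f := fun s => -1 * H3 s). intros; ring. apply cont_scal, H3_cont; auto. Qed.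

Lemma psi_bounded : exists M, forall x, Rabs (psi x) <= M.
Proof. apply (bounded_comp (fun s => - b * P s (2/3))). intros s. apply cont_scal, P_cont; lra. Qed.

Lemma psi_C1 : CkWkinf 1 psi.
Proof. split. split.
 - intros j x Hj. destruct j as [|j]; [|lia]. rewrite Dn0. eexists; apply psi_deriv.
 - intros j x Hj. destruct j as [|[|j]]; [| |lia]. rewrite Dn0; apply psi_cont. rewrite Dn_psi_1; apply psi1_cont.
 - intros j Hj. destruct j as [|[|j]]; [| |lia]. rewrite Dn0. apply psi_bounded.
   rewrite Dn_psi_1. apply (bounded_sg K1). apply K1_cont. Qed.

Lemma psi_C2 (hq : - (2/3) < p) : CkWkinf 2 psi.
Proof. split. split.
 - intros j x Hj. destruct j as [|[|j]]; [| |lia]. rewrite Dn0. eexists; apply psi_deriv.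
   rewrite Dn_psi_1. eexists; apply psi1_deriv; auto.
 - intros j x Hj. destruct j as [|[|[|j]]]; [| | |lia]. rewrite Dn0; apply psi_cont. rewrite Dn_psi_1; apply psi1_cont.
   rewrite Dn_psi_2 by auto. apply psi2_cont; auto.
 - intros j Hj. destruct j as [|[|[|j]]]; [| | |lia]. rewrite Dn0. apply psi_bounded.
   rewrite Dn_psi_1. apply (bounded_sg K1). apply K1_cont.
   rewrite Dn_psi_2 by auto. apply (bounded_comp (fun s => - H2 s)). intros s.
   apply cont_ext with (f := fun s => -1 * H2 s). intros; ring. apply cont_scal, H2_cont; auto. Qed.

Lemma CkW_opp k (f : R -> R) : CkWkinf k f -> CkWkinf k (fun x => - f x).
Proof. intros [[H1 H2] H3].
 assert (E : forall j, Derive_n (fun x => - f x) j = (fun x => - Derive_n f j x)).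
 { intros j. apply functional_extensionality. intros x. apply Derive_n_opp. }
 split. split.
 - intros j x Hj. rewrite E. destruct (H1 j x Hj) as [l Hl]. exists (-1 * l).
   apply isd_ext with (f := fun x => -1 * Derive_n f j x). intros; ring. apply isd_scal; auto.
 - intros j x Hj. rewrite E. apply cont_ext with (f := fun x => -1 * Derive_n f j x). intros; ring.
   apply cont_scal; auto.
 - intros j Hj. rewrite E. destruct (H3 j Hj) as [M HM]. exists M. intros x. rewrite Rabs_Ropp; auto. Qed.

Lemma phi_rd : radially_decreasing phi.
Proof. split. apply phi_even. intros x y Hx Hxy. unfold phi. apply ghat_mono.
 rewrite !Rabs_pos_eq; lra. Qed.

Lemma mpsi_eq x : - psi x = b * P (phi x) (2/3).
Proof. unfold psi. ring. Qed.

Lemma mpsi_rd : radially_decreasing (fun x => - psi x).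
Proof. split. intros x. rewrite !mpsi_eq, phi_even; auto.
 intros x y Hx Hxy. rewrite !mpsi_eq. apply Rmult_le_compat_l. lra. apply P_le. lra.
 split. apply phi_range. apply phi_rd; auto. Qed.

Lemma mpsi_nonneg x : 0 <= - psi x.
Proof. rewrite mpsi_eq. apply Rmult_le_pos. lra. apply P_ge0. Qed.

Lemma phi_nontriv : exists x, phi x <> 0.
Proof. exists 0. rewrite phi_0. assert (h := phi0_pos). lra. Qed.

Lemma phi_cs : p < 0 -> compactly_supported phi.
Proof. intros Hp. exists Lsup. intros x Hx. unfold phi. apply ghat_out.
 assert (h := Lsup_pos Hp). lra. intros [_ H]. specialize (H Hp). lra. Qed.

Lemma psi_cs : p < 0 -> compactly_supported psi.
Proof. intros Hp. destruct (phi_cs Hp) as [M HM]. exists M. intros x Hx. unfold psi. rewrite HM; auto. rewrite P_0; ring. Qed.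

Lemma rpow_P z e : 0 <= z -> rpow z e = P z e.
Proof. intros H. unfold P. rewrite Rabs_pos_eq; auto. Qed.

Lemma Cmod_u (th c : R) : Cmod (Cmult ((cos th, sin th) : C) (RtoC c)) = Rabs c.
Proof. rewrite Cmod_mult. replace (Cmod ((cos th, sin th) : C)) with 1. rewrite Cmod_R. apply Rmult_1_l.
 unfold Cmod. cbn [fst snd]. assert (E := sin2_cos2 th). unfold Rsqr in E.
 replace (cos th ^ 2 + sin th ^ 2) with 1 by (rewrite <- E; ring). rewrite sqrt_1; auto. Qed.

Lemma phi2_deriv x : is_derive (fun y => phi y ^ 2) x (2 * phi x * phi1 x).
Proof. apply isd_ext with (f := fun y => phi y * phi y). intros; ring.
 apply isd_ext_val with (phi1 x * phi x + phi x * phi1 x). ring. apply isd_mult; apply phi_deriv. Qed.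

Lemma main_sec (gamma : R) (hg : 0 < gamma) (Hbg : b = Rpower gamma (-(1/3))) :
  exists phi psi : R -> R,
    (exists x, phi x <> 0) /\
    is_solution p a gamma
      (fun x t => Cmult ((cos (w * t), sin (w * t)) : C) (RtoC (phi x)))
      (fun x t => psi x) /\
    (forall x, 0 <= phi x) /\ radially_decreasing phi /\
    (forall x, - psi x = rpow (phi x ^ 2 / gamma) (1/3)) /\
    (forall x, 0 <= - psi x) /\ radially_decreasing (fun x => - psi x) /\
    CkWkinf 2 phi /\ CkWkinf 1 (fun x => - psi x) /\
    (-(2/3) < p -> CkWkinf 3 phi /\ CkWkinf 2 psi) /\
    (p < 0 -> compactly_supported phi /\ compactly_supported psi).
Proof.
 assert (Hb3 : b ^ 3 = / gamma).
 { rewrite Hbg. simpl. rewrite Rmult_1_r. rewrite <- !Rpower_plus.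
   replace (- (1 / 3) + (- (1 / 3) + - (1 / 3))) with (Ropp 1) by field. rewrite Rpower_Ropp, Rpower_1; auto. }
 exists phi, psi. split; [apply phi_nontriv|]. split; [|split; [intros x; apply phi_range|]].
 2: split; [apply phi_rd|]. 2: split.
 3: split; [apply mpsi_nonneg|]. 3: split; [apply mpsi_rd|].
 3: split; [apply phi_C2|]. 3: split; [apply CkW_opp, psi_C1|].
 3: split; [intros hq; split; [apply phi_C3; auto|apply psi_C2; auto]|].
 3: intros Hp; split; [apply phi_cs; auto|apply psi_cs; auto].
 2: { intros x. rewrite mpsi_eq. assert (h := phi_range x).
      rewrite rpow_P. replace (phi x ^ 2 / gamma) with (P (phi x) 2 * / gamma) by (rewrite P_2; reflexivity).
      rewrite P_mult_distr, P_P.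
      replace (2 * (1/3)) with (2/3) by field. rewrite Rmult_comm. f_equal.
      rewrite P_pos_eq. rewrite Hbg. unfold Rpower. rewrite ln_Rinv by auto. f_equal. ring.
      apply Rinv_0_lt_compat; auto.
      apply Rmult_le_pos. apply pow2_ge_0. apply Rlt_le, Rinv_0_lt_compat; auto. }
 split.
 - intros x t. set (c := cos (w * t)). set (s := sin (w * t)).
   exists ((- (w * s) * phi x, w * c * phi x) : C).
   exists ((c * G (phi x), s * G (phi x)) : C).
   exists (fun y => ((c * phi1 y, s * phi1 y) : C)).
   split; [|split; [|split]].
   + apply isd_C_ext with (f := fun r => cos (w * r) * phi x) (g := fun r => sin (w * r) * phi x).
     intros r. unfold Cmult, RtoC. simpl. f_equal; ring.
     auto_derive; auto. unfold s; ring. auto_derive; auto. unfold c; ring.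
   + intros y. apply isd_C_ext with (f := fun r => c * phi r) (g := fun r => s * phi r).
     intros r. unfold Cmult, RtoC. simpl. f_equal; ring.
     apply isd_scal, phi_deriv. apply isd_scal, phi_deriv.
   + apply isd_C_ext with (f := fun r => c * phi1 r) (g := fun r => s * phi1 r).
     intros r. reflexivity.
     apply isd_scal, phi1_deriv. apply isd_scal, phi1_deriv.
   + unfold c, s. unfold nonlin. rewrite Cmod_u. assert (h := phi_range x). rewrite Rabs_pos_eq by lra.
     rewrite rpow_P by lra. unfold psi.
     assert (EG : G (phi x) = w * phi x + a * (P (phi x) p * phi x) - b * (P (phi x) (2/3) * phi x)).
     { assert (Ephi : phi x = P (phi x) 1) by (rewrite P_1, Rabs_pos_eq; lra).
       assert (E1 : P (phi x) p * phi x = P (phi x) (p + 1)).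
       { transitivity (P (phi x) p * P (phi x) 1). f_equal; exact Ephi. apply P_mul. }
       assert (E2 : P (phi x) (2/3) * phi x = P (phi x) (5/3)).
       { transitivity (P (phi x) (2/3) * P (phi x) 1). f_equal; exact Ephi. rewrite P_mul. f_equal. field. }
       rewrite E1, E2. reflexivity. }
     rewrite EG. unfold Cplus, Cmult, Ci, RtoC. simpl. f_equal; ring.
 - intros x t. exists 0, (2 * phi x * phi1 x), (2 * phi x * phi1 x). split; [|split; [|split]].
   + apply isd_const.
   + apply isd_ext with (f := fun y => phi y ^ 2). intros y. unfold flux, psi.
     replace ((- b * P (phi y) (2/3)) ^ 3) with (- (b ^ 3) * (P (phi y) (2/3) * (P (phi y) (2/3) * P (phi y) (2/3)))) by ring.
     rewrite !P_mul. replace (2/3 + (2/3 + 2/3)) with 2 by field. rewrite P_2, Hb3. field. lra.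
     apply phi2_deriv.
   + apply isd_ext with (f := fun y => phi y ^ 2). intros y. rewrite Cmod_u. rewrite Rabs_pos_eq. auto. apply phi_range.
     apply phi2_deriv.
   + ring. Qed.

End Model.

Theorem proposition6 (p gamma a w : R) :
  -1 < p <= 2/3 -> 0 < gamma -> 0 < a -> 0 < w ->
  (p = 2/3 -> Rpower gamma (-(1/3)) > a) ->
  exists phi psi : R -> R,
    (exists x, phi x <> 0) /\
    is_solution p a gamma
      (fun x t => Cmult ((cos (w * t), sin (w * t)) : C) (RtoC (phi x)))
      (fun x t => psi x) /\
    (forall x, 0 <= phi x) /\ radially_decreasing phi /\
    (forall x, - psi x = rpow (phi x ^ 2 / gamma) (1/3)) /\
    (forall x, 0 <= - psi x) /\ radially_decreasing (fun x => - psi x) /\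
    CkWkinf 2 phi /\ CkWkinf 1 (fun x => - psi x) /\
    (-(2/3) < p -> CkWkinf 3 phi /\ CkWkinf 2 psi) /\
    (p < 0 -> compactly_supported phi /\ compactly_supported psi).
Proof. intros Hp Hg Ha Hw Hc.
 assert (hb : 0 < Rpower gamma (-(1/3))) by (unfold Rpower; apply exp_pos).
 eapply (main_sec p a (Rpower gamma (-(1/3))) w); auto.
Qed.
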